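(* Let a tiling of the sphere by angle congruent pentagons have pentagon with five pairwise distinct angles $\alpha,\beta,\gamma,\delta,\epsilon$, and suppose every vertex is of one of the types $\alpha\beta\gamma$, $\delta^3$, $\epsilon^4$. Then, up to permuting the labels $\alpha,\beta,\gamma$ and reflection, the tiling is the pentagonal subdivision of the cube, with $\delta$ at the original cube vertices, $\epsilon$ at the face centers, and $\alpha,\beta,\gamma$ at the vertices added on edges; in particular $\delta$ and $\epsilon$ are not adjacent corners in the pentagon. The same conclusion with $\epsilon^4$ replaced by $\epsilon^5$ holds with the cube replaced by the dodecahedron.
   Context: A spherical tiling by angle congruent pentagons: embedded graph in the sphere, all faces pentagons, edge-to-edge, every vertex of degree $\ge3$; each corner carries a positive real angle; angles at each vertex sum to $2\pi$; all tiles have the same cyclic sequence of corner angles up to rotation and reflection. Vertex type $\alpha\beta\gamma$ means a degree $3$ vertex with corner angles $\alpha,\beta,\gamma$; $\delta^3$ a degree $3$ vertex with all corners $\delta$; $\epsilon^4$ (resp. $\epsilon^5$) a degree $4$ (resp. $5$) vertex with all corners $\epsilon$. Pentagonal subdivision of a tiling of the oriented sphere: add a vertex at the center of each tile and two vertices on each edge; orienting each tile's boundary, call the two new vertices on each boundary edge first and second along this direction; join the center to the second new vertex of each boundary edge. *)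

(* Defs.v *)
From Stdlib Require Import Reals.
From Stdlib Require Import Sorting.Permutation.
From mathcomp Require Import all_boot all_fingroup.

Set Implicit Arguments.
Unset Strict Implicit.
Unset Printing Implicit Defensive.

(* Combinatorial maps (rotation systems).                                     *)
(*   D      : finite set of darts (half-edges),                               *)
(*   sigma  : rotation of the darts around their common vertex,               *)
(*   alpha  : the other half of the same edge (fixed-point free involution).  *)
(* Vertices = sigma-orbits, edges = alpha-orbits.  The dart d also names the  *)
(* corner of the tiling at the vertex of d between d and sigma d; the corners *)
(* of one tile (face), in cyclic order along its boundary, form an orbit of   *)
(*   face_next := alpha \o sigma.                                             *)
(* A connected map whose Euler characteristic V - E + F equals 2 is exactly   *)
(* a (cellularly) embedded connected graph in the oriented sphere.            *)

Section Maps.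
Variable D : finType.
Variables sigma alpha : D -> D.

Definition face_next (d : D) : D := alpha (sigma d).

Definition nb_vertices : nat := n_comp (frel sigma) predT.
Definition nb_faces : nat := n_comp (frel face_next) predT.

Definition sphere_map : Prop :=
  [/\ injective sigma,
      (forall d, alpha (alpha d) = d),
      (forall d, alpha d != d),
      (forall x y, connect (fun a b => (b == sigma a) || (b == alpha a)) x y)
    & (* Euler's formula  V - E + F = 2,  with E = #|D|/2 *)
      (nb_vertices + nb_faces).*2 = #|D| + 4 ].

Definition degree (d : D) : nat := fingraph.order sigma d.

Definition pentagonal_tiling : Prop :=
  [/\ sphere_map,
      (forall d, fingraph.order face_next d = 5),
      (forall d i j, i < j < 5 ->
          ~~ fconnect sigma (iter i face_next d) (iter j face_next d))
    & (forall d, 3 <= degree d) ].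

Variable angle : D -> R.

Definition vertex_angles (d : D) : seq R := map angle (fingraph.orbit sigma d).

Definition tile_angles (d : D) : seq R := map angle (traject face_next d 5).

Definition angle_congruent (p : seq R) : Prop :=
  [/\ pentagonal_tiling,
      (forall d, Rlt R0 (angle d)),
      (forall d, foldr Rplus R0 (vertex_angles d) = Rmult (IZR 2) PI)
    & (forall d, exists k, tile_angles d = rot k p \/ tile_angles d = rot k (rev p)) ].

End Maps.

(* Pentagonal subdivision of a map (B, sB, aB), the sphere being oriented by  *)
(* the rotations sB, and tiles oriented by the face walk face_next.           *)
(* For every dart d of B (half-edge at vertex u along edge e) let p(d) be the *)
(* new vertex on e nearer to u.  The new darts are B * 'I_5 with kinds        *)
(*   kA (0): at u, towards p(d);                                              *)
(*   kB (1): at p(d), towards u;                                              *)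
(*   kC (2): at p(d), towards p(alpha d) (middle part of e);                  *)
(*   kS (3): at p(d), towards the center of the tile containing corner d;     *)
(*   kT (4): at that center, towards p(d).                                    *)
(* p(d) is the *second* new vertex of e for the boundary orientation of the   *)
(* tile containing corner d, so the spokes S/T are exactly the segments       *)
(* "center -- second new vertex of each boundary edge".                       *)
(* Kind kA darts sit at the original vertices, kT darts at the tile centers,  *)
(* and kB, kC, kS darts at the vertices added on the edges.                   *)

Definition kA : 'I_5 := @Ordinal 5 0 isT.
Definition kB : 'I_5 := @Ordinal 5 1 isT.
Definition kC : 'I_5 := @Ordinal 5 2 isT.
Definition kS : 'I_5 := @Ordinal 5 3 isT.
Definition kT : 'I_5 := @Ordinal 5 4 isT.

Section PentSubdiv.
Variable B : finType.
Variables sB aB : B -> B.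

Definition ps_sigma (x : B * 'I_5) : B * 'I_5 :=
  let: (d, k) := x in
  match nat_of_ord k with
  | 0 => (sB d, kA)
  | 1 => (d, kC)
  | 2 => (d, kS)
  | 3 => (d, kB)
  | _ => (finv (face_next sB aB) d, kT)
  end.

Definition ps_alpha (x : B * 'I_5) : B * 'I_5 :=
  let: (d, k) := x in
  match nat_of_ord k with
  | 0 => (d, kB)
  | 1 => (d, kA)
  | 2 => (aB d, kC)
  | 3 => (d, kT)
  | _ => (d, kS)
  end.

End PentSubdiv.

(* The cube: vertices {0,1}^3, the dart (v, i) is the edge at v in the        *)
(* direction of coordinate i; the cyclic order of the 3 directions at v is    *)
(* reversed according to the parity of v (consistent orientation).            *)

Notation cube_dart := ({ffun 'I_3 -> bool} * 'I_3)%type.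

Definition parity3 (v : {ffun 'I_3 -> bool}) : bool :=
  v (@Ordinal 3 0 isT) (+) v (@Ordinal 3 1 isT) (+) v (@Ordinal 3 2 isT).

Definition cube_sigma (x : cube_dart) : cube_dart :=
  let: (v, i) := x in
  (v, if parity3 v then ord_pred i else ordS i).

Definition cube_alpha (x : cube_dart) : cube_dart :=
  let: (v, i) := x in
  ([ffun j => if j == i then ~~ v j else v j], i).

(* The dodecahedron, as the regular map of type {5,3} whose darts are the    *)
(* rotations of the dodecahedron, i.e. the alternating group A5: sigma is    *)
(* right multiplication by an element of order 3, alpha by an involution,    *)
(* and alpha \o sigma (faces) has order 5.  V = 20, E = 30, F = 12.          *)

Notation dodeca_dart := {g : {perm 'I_5} | ~~ odd_perm g}.

Definition dod_s : {perm 'I_5} := (tperm (@Ordinal 5 0 isT) (@Ordinal 5 1 isT) * tperm (@Ordinal 5 1 isT) (@Ordinal 5 2 isT))%g.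
Definition dod_a : {perm 'I_5} := (tperm (@Ordinal 5 0 isT) (@Ordinal 5 3 isT) * tperm (@Ordinal 5 1 isT) (@Ordinal 5 4 isT))%g.

Lemma even_dod_s : ~~ odd_perm dod_s.
Proof. by rewrite /dod_s /dod_a odd_permM !odd_tperm. Qed.

Lemma even_dod_a : ~~ odd_perm dod_a.
Proof. by rewrite /dod_s /dod_a odd_permM !odd_tperm. Qed.

Lemma even_mul (g h : {perm 'I_5}) :
  ~~ odd_perm g -> ~~ odd_perm h -> ~~ odd_perm (g * h)%g.
Proof. by rewrite odd_permM; case: (odd_perm g); case: (odd_perm h). Qed.

Definition dodeca_sigma (x : dodeca_dart) : dodeca_dart :=
  exist _ (val x * dod_s)%g (even_mul (valP x) even_dod_s).

Definition dodeca_alpha (x : dodeca_dart) : dodeca_dart :=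
  exist _ (val x * dod_a)%g (even_mul (valP x) even_dod_a).

Definition is_psubdiv_of (D : finType) (sigma alpha : D -> D) (angle : D -> R)
    (a b c d e : R) (B : finType) (sB aB : B -> B) : Prop :=
  exists phi : D -> B * 'I_5,
    [/\ bijective phi,
        (forall x, phi (alpha x) = ps_alpha aB (phi x)),
        (* orientation preserving, or reversing (reflection) *)
        (forall x, phi (sigma x) = ps_sigma sB aB (phi x)) \/
        (forall x, ps_sigma sB aB (phi (sigma x)) = phi x)
      & forall x,
          [/\ angle x = d <-> (phi x).2 = kA,
              angle x = e <-> (phi x).2 = kT
            & (angle x = a \/ angle x = b \/ angle x = c) <->
              ((phi x).2 = kB \/ (phi x).2 = kC \/ (phi x).2 = kS)] ].

Definition de_not_adjacent (D : finType) (sigma alpha : D -> D) (angle : D -> R)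
    (d e : R) : Prop :=
  forall x, ~ (angle x = d /\ angle (face_next sigma alpha x) = e) /\
            ~ (angle x = e /\ angle (face_next sigma alpha x) = d).

(* Main.v *)
Require Import Defs.
From Stdlib Require Import Reals.
From Stdlib Require Import Sorting.Permutation.
From mathcomp Require Import all_boot all_fingroup.
From mathcomp Require Import alt.
From Stdlib Require Import Lia.
From mathcomp Require Import zify.
Set Implicit Arguments. Unset Strict Implicit. Unset Printing Implicit Defensive.

Section Cover.
Variables (ts ta : seq nat) (km : seq 'I_5) (ws : seq (seq bool)) (deds : seq (nat * nat)).
Variables (KS KA : 'I_5 -> 'I_5) (nK : 'I_5 -> nat).
Variable n : nat.

Definition stM (g : bool) (t : nat) := nth 0 (if g then ts else ta) t.
Definition kmt t := nth ord0 km t.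
Definition wst t := nth [::] ws t.
Definition evalK w (k : 'I_5) := foldl (fun k (g:bool) => if g then KS k else KA k) k w.
Definition relW (r : nat) (k : 'I_5) : seq bool :=
  match r with
  | 0 => [:: false; false]
  | 1 => flatten (nseq 5 [:: true; false])
  | 2 => flatten (nseq 5 [:: false; true])
  | _ => nseq (nK k) true end.
Definition idx t (g:bool) := t.*2 + g.
Definition known K t g := nth false K (idx t g).
Fixpoint chk K u w t : option nat :=
  match w with
  | [::] => None
  | g :: w' => match w' with
      | [::] => if stM g u == t then Some (idx u g) else None
      | _ => if known K u g then chk K (stM g u) w' t else None end
  end.
Definition ded_step (oK : option (seq bool)) (d : nat * nat) :=
  if oK is Some K then if d.1 < n then
    (if chk K d.1 (relW d.2 (kmt d.1)) d.1 is Some i then Some (set_nth false K i true) else None) else None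
  else None.
Definition K0 := mkseq (fun i => wst (stM (odd i) i./2) == rcons (wst i./2) (odd i)) n.*2.
Definition cert_ok :=
  [&& size ts == n, size ta == n, all (fun t => t < n) ts, all (fun t => t < n) ta,
      all (fun t => (kmt (stM true t) == KS (kmt t)) && (kmt (stM false t) == KA (kmt t))) (iota 0 n),
      all (fun t => evalK (wst t) (kmt 0) == kmt t) (iota 0 n) &
      if foldl ded_step (Some K0) deds is Some K then all (fun i => nth false K i) (iota 0 n.*2) else false].

Lemma idx_half t (g : bool) : (idx t g)./2 = t.
Proof. by rewrite /idx addnC half_bit_double. Qed.
Lemma idx_odd t (g : bool) : odd (idx t g) = g.
Proof. by rewrite /idx oddD odd_double; case: g. Qed.
Lemma idx_inj t u g h : idx t g = idx u h -> t = u /\ g = h.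
Proof. by move=> e; split; [rewrite -(idx_half t g) e idx_half | rewrite -(idx_odd t g) e idx_odd]. Qed.

Hypothesis cert : cert_ok.
Ltac dcert := move: cert; rewrite /cert_ok => /andP [/eqP s1 /andP [/eqP s2 /andP [a1 /andP [a2 /andP [k1 /andP [k2 fin]]]]]].

Lemma stM_lt g t : t < n -> stM g t < n.
Proof.
dcert => lt.
rewrite /stM; case: g.
- by apply: (all_nthP 0 a1); rewrite s1.
- by apply: (all_nthP 0 a2); rewrite s2.
Qed.

Variables (D : finType) (sD aD : D -> D) (kD : D -> 'I_5) (x0 : D).
Definition stD (g : bool) y := if g then sD y else aD y.
Definition evalD w y := foldl (fun y g => stD g y) y w.
Hypothesis hKS : forall y, kD (sD y) = KS (kD y).
Hypothesis hKA : forall y, kD (aD y) = KA (kD y).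
Hypothesis hrel : forall y r, evalD (relW r (kD y)) y = y.
Hypothesis hx0 : kD x0 = kmt 0.

Definition psi t := evalD (wst t) x0.

Lemma kD_eval w y : kD (evalD w y) = evalK w (kD y).
Proof.
elim: w y => //= g w IH y; rewrite IH; congr evalK.
by case: g; rewrite /= ?hKS ?hKA.
Qed.

Lemma psi_kind t : t < n -> kD (psi t) = kmt t.
Proof.
move=> lt; rewrite /psi kD_eval hx0.
dcert; move/allP: k2 => /(_ t).
by rewrite mem_iota add0n lt => /(_ isT) /eqP.
Qed.

Definition Inv K := forall t g, t < n -> known K t g -> psi (stM g t) = stD g (psi t).

Lemma chk_sound K : Inv K -> forall w u t i, u < n -> chk K u w t = Some i ->
  exists v g, [/\ v < n, i = idx v g & (evalD w (psi u) = psi t -> psi (stM g v) = stD g (psi v))].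
Proof.
move=> HK; elim=> // g w IH u t i lt /=.
case: w IH => [|g' w] IH.
  case: eqP => // e [<-]; exists u, g; split => //= e2.
  by rewrite e -e2.
case kn: (known K u g) => // /IH [|v [h [lv ei H]]]; first exact: stM_lt.
exists v, h; split => // e2; apply: H; rewrite -e2 /= HK //.
Qed.

Lemma Inv_K0 : Inv K0.
Proof.
move=> t g lt; rewrite /known /K0 nth_mkseq; last first.
  by rewrite /idx -addnn -addnn; case: g => /=; lia.
rewrite idx_half idx_odd => /eqP e.
by rewrite /psi e /evalD -cats1 foldl_cat.
Qed.

Lemma ded_sound oK d K : (forall K', oK = Some K' -> Inv K') -> ded_step oK d = Some K -> Inv K.
Proof.
case: oK => // K1 /(_ K1 erefl) H1 /=.
case: d => t r /=.
case: ifP => // lt.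
case ec: chk => [i|] // [<-].
have [v [h [lv ei H]]] := chk_sound H1 lt ec.
move=> u g lu; rewrite /known nth_set_nth /=.
case: eqP => [e _|_ /H1]; last by apply.
rewrite ei in e; case: (idx_inj e) => -> ->; apply: H.
by rewrite -{1}(psi_kind lt) hrel.
Qed.

Lemma psi_comm t g : t < n -> psi (stM g t) = stD g (psi t).
Proof.
dcert; move: fin.
have : forall K', Some K0 = Some K' -> Inv K' by move=> K' [<-]; exact: Inv_K0.
elim: deds (Some K0) => [|d ds IH] oK HK /=.
  case: oK HK => // K /(_ K erefl) HK /allP Hall lt.
  apply: HK => //; apply: Hall; rewrite mem_iota add0n /idx -addnn; case: g => /=; lia.
apply: IH => K' e; exact: ded_sound HK e.
Qed.

Hypothesis conn : forall x y, connect (fun a b => (b == sD a) || (b == aD a)) x y.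
Hypothesis cardD : #|D| = n.

Lemma psi_onto y : exists2 t, t < n & psi t = y.
Proof.
have n0 : 0 < n by rewrite -cardD; apply/card_gt0P; exists y.
have /connectP [p pth ->] := conn (psi 0) y.
move: (0) n0 pth => t lt pth; elim: p t lt pth => [|z p IH] t lt /=; first by exists t.
case/andP => /orP [] /eqP ez pth.
  have := IH (stM true t) (stM_lt _ lt); rewrite psi_comm //= -ez; exact.
have := IH (stM false t) (stM_lt _ lt); rewrite psi_comm //= -ez; exact.
Qed.

Lemma psi_uniq : uniq (map psi (iota 0 n)).
Proof.
apply: (@leq_size_uniq _ (enum D)); first exact: enum_uniq.
  move=> y _; have [t lt <-] := psi_onto y.
  by apply: map_f; rewrite mem_iota.
by rewrite size_map size_iota -cardE cardD.
Qed.

Lemma psi_inj t u : t < n -> u < n -> psi t = psi u -> t = u.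
Proof.
move=> lt lu e; have := nth_uniq (psi 0) _ _ psi_uniq.
rewrite size_map size_iota => /(_ t u lt lu).
by rewrite !(nth_map 0) ?size_iota // !nth_iota // e eqxx => /esym /eqP.
Qed.

End Cover.

Section Assemble.
Variables (ts ta : seq nat) (km : seq 'I_5) (ws : seq (seq bool)) (deds : seq (nat * nat)).
Variables (KS KA : 'I_5 -> 'I_5) (nK : 'I_5 -> nat) (n : nat).
Variables (D : finType) (sD aD : D -> D) (kD : D -> 'I_5) (x0 : D).
Variables (T : finType) (sT aT : T -> T) (kT : T -> 'I_5) (tT0 : T).

Definition iT t := evalD sT aT (wst ws t) tT0.
Definition iso_ok :=
  all (fun t => [&& iT (stM ts ta true t) == sT (iT t), iT (stM ts ta false t) == aT (iT t)
                  & kT (iT t) == kmt km t]) (iota 0 n) && uniq (map iT (iota 0 n)).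

Theorem assemble :
  cert_ok ts ta km ws deds KS KA nK n ->
  (forall y, kD (sD y) = KS (kD y)) ->
  (forall y, kD (aD y) = KA (kD y)) ->
  (forall y r, evalD sD aD (relW nK r (kD y)) y = y) ->
  kD x0 = kmt km 0 ->
  (forall x y, connect (fun a b => (b == sD a) || (b == aD a)) x y) ->
  #|D| = n -> iso_ok -> #|T| = n ->
  exists phi : D -> T, [/\ bijective phi, (forall x, phi (sD x) = sT (phi x)),
     (forall x, phi (aD x) = aT (phi x)) & (forall x, kT (phi x) = kD x)].
Proof.
move=> cert hKS hKA hrel hx0 conn cD /andP [/allP iok iuniq] cT.
pose ps := psi ws sD aD x0.
have ponto := psi_onto cert hKS hKA hrel hx0 conn cD.
have pinj := psi_inj cert hKS hKA hrel hx0 conn cD.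
have pcomm := psi_comm cert hKS hKA hrel hx0.
have pkind := psi_kind cert hKS hKA hx0.
pose g (y : D) := if [pick i : 'I_n | ps i == y] is Some i then val i else 0.
have gP y : g y < n /\ ps (g y) = y.
  rewrite /g; case: pickP => [i /eqP <- | H]; first by split; [exact: ltn_ord|].
  have [t lt et] := ponto y.
  by move: (H (Ordinal lt)); rewrite /= /ps et eqxx.
have iTinj t u : t < n -> u < n -> iT t = iT u -> t = u.
  move=> lt lu e; have := nth_uniq (iT 0) _ _ iuniq.
  rewrite size_map size_iota => /(_ t u lt lu).
  by rewrite !(nth_map 0) ?size_iota // !nth_iota // e eqxx => /esym /eqP.
have iTonto x : exists2 t, t < n & iT t = x.
  have cs : #|[pred z in map (iT) (iota 0 n)]| = #|T|.
    by rewrite (card_uniqP iuniq) size_map size_iota cT.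
  have /subset_cardP /(_ (subset_predT _)) /(_ x) := cs.
  rewrite !inE => e; have : x \in map iT (iota 0 n) by rewrite e.
  case/mapP => t; rewrite mem_iota add0n => lt ->; by exists t.
pose gT (x : T) := if [pick i : 'I_n | iT i == x] is Some i then val i else 0.
have gTP x : gT x < n /\ iT (gT x) = x.
  rewrite /gT; case: pickP => [i /eqP <- | H]; first by split; [exact: ltn_ord|].
  have [t lt et] := iTonto x.
  by move: (H (Ordinal lt)); rewrite /= et eqxx.
have ik t : t < n -> [&& iT (stM ts ta true t) == sT (iT t),
    iT (stM ts ta false t) == aT (iT t) & kT (iT t) == kmt km t].
  by move=> lt; apply: iok; rewrite mem_iota.
have gstep b y : g (stD sD aD b y) = stM ts ta b (g y).
  have [lg pg] := gP y; have [lg' pg'] := gP (stD sD aD b y).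
  apply: pinj => //; first exact: stM_lt cert _ _ lg.
  by rewrite -/ps pg' /ps pcomm // -/ps pg.
exists (fun y => iT (g y)); split.
- exists (fun x => ps (gT x)).
  + move=> y /=; have [lg pg] := gP y.
    have [l1 p1] := gTP (iT (g y)).
    by rewrite (iTinj _ _ l1 lg p1).
  + move=> x /=; have [l1 p1] := gTP x; have [l2 p2] := gP (ps (gT x)).
    by rewrite (pinj _ _ l2 l1 p2).
- move=> x; have [lg _] := gP x.
  by rewrite (gstep true x); case/and3P: (ik _ lg) => /eqP.
- move=> x; have [lg _] := gP x.
  by rewrite (gstep false x); case/and3P: (ik _ lg) => _ /eqP.
- move=> x; have [lg pg] := gP x.
  case/and3P: (ik _ lg) => _ _ /eqP ->.
  by rewrite -(pkind _ lg) -/ps pg.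
Qed.
End Assemble.

Section IsoU.
Variables (ts ta : seq nat) (km : seq 'I_5) (ws : seq (seq bool)) (n : nat).
Variables (T : finType) (sT aT : T -> T) (kT : T -> 'I_5) (tT0 : T).
Variables (U : eqType) (sU aU : U -> U) (kU : U -> 'I_5) (u0 : U) (F : T -> U).
Definition jU t := foldl (fun y (g : bool) => if g then sU y else aU y) u0 (wst ws t).
Definition iso_okU :=
  all (fun t => [&& jU (stM ts ta true t) == sU (jU t), jU (stM ts ta false t) == aU (jU t)
                  & kU (jU t) == kmt km t]) (iota 0 n) && uniq (map jU (iota 0 n)).
Lemma iso_okU_ok : injective F -> (forall x, F (sT x) = sU (F x)) -> (forall x, F (aT x) = aU (F x)) ->
  (forall x, kT x = kU (F x)) -> F tT0 = u0 -> iso_okU -> iso_ok ts ta km ws n sT aT kT tT0.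
Proof.
move=> Finj Fs Fa Fk F0 /andP [/allP H Hu].
have Fi t : F (iT ws sT aT tT0 t) = jU t.
  rewrite /iT /jU /evalD -F0; elim: (wst ws t) tT0 => //= g w IH x.
  by rewrite IH; case: g => /=; rewrite ?Fs ?Fa.
apply/andP; split.
  apply/allP => t /H /and3P [/eqP e1 /eqP e2 /eqP e3].
  apply/and3P; split; apply/eqP.
  - by apply: Finj; rewrite Fs !Fi.
  - by apply: Finj; rewrite Fa !Fi.
  - by rewrite Fk Fi.
rewrite -(map_inj_uniq Finj) -map_comp.
by rewrite (eq_map (g := jU)) // => t /=; rewrite Fi.
Qed.
End IsoU.

Definition o5 (k : nat) : 'I_5 := match k with 0 => kA | 1 => kB | 2 => kC | 3 => kS | _ => kT end.
Definition ts_cubeP : seq nat := [:: 1; 3; 5; 6; 8; 9; 0; 12; 13; 2; 16; 17; 18; 4; 21; 22; 23; 25; 7; 28; 29; 30; 31; 10; 34; 11; 35; 36; 37; 38; 14; 15; 41; 42; 43; 44; 45; 19; 20; 48; 49; 50; 51; 24; 26; 27; 55; 56; 57; 58; 60; 33; 62; 63; 64; 65; 66; 68; 40; 70; 32; 71; 72; 74; 75; 77; 47; 79; 39; 80; 81; 82; 52; 53; 73; 54; 86; 46; 87; 88; 89; 59; 61; 84; 93; 94; 95; 96; 67; 69; 91; 100; 101; 83; 103; 76; 78; 98; 107; 108; 90; 109; 111; 85; 105; 112; 113; 97; 114; 92; 116; 117; 104; 118; 99; 110; 119; 102; 106; 115].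
Definition ta_cubeP : seq nat := [:: 2; 4; 0; 7; 1; 10; 11; 3; 14; 15; 5; 6; 19; 20; 8; 9; 24; 26; 27; 12; 13; 31; 32; 33; 16; 34; 17; 18; 38; 39; 40; 21; 22; 23; 25; 45; 46; 47; 28; 29; 30; 51; 52; 53; 54; 35; 36; 37; 58; 59; 61; 41; 42; 43; 44; 66; 67; 69; 48; 49; 70; 50; 73; 75; 76; 78; 55; 56; 79; 57; 60; 83; 84; 62; 85; 63; 64; 86; 65; 68; 90; 91; 92; 71; 72; 74; 77; 97; 98; 99; 80; 81; 82; 102; 104; 105; 106; 87; 88; 89; 109; 110; 93; 111; 94; 95; 96; 114; 115; 100; 101; 103; 118; 119; 107; 108; 117; 116; 112; 113].
Definition km_cubeP : seq 'I_5 := map o5 [:: 4; 4; 3; 4; 3; 1; 4; 3; 1; 2; 0; 3; 1; 2; 0; 2; 0; 1; 2; 0; 2; 0; 3; 0; 1; 2; 0; 2; 0; 3; 0; 1; 4; 1; 2; 0; 3; 0; 1; 4; 1; 4; 2; 3; 0; 1; 4; 1; 4; 2; 4; 3; 2; 4; 1; 4; 2; 4; 3; 2; 4; 3; 3; 4; 2; 4; 3; 2; 4; 3; 3; 1; 1; 4; 4; 3; 2; 4; 3; 3; 1; 1; 2; 0; 0; 3; 3; 1; 1; 2; 0; 0; 2; 0; 1; 1; 2; 0; 0; 2; 0; 3; 1; 2; 0; 0; 2; 0; 3; 1; 4; 2; 0; 3; 1; 4; 4; 3; 1; 4].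
Definition ws_cubeP : seq (seq bool) := [:: [:: ]; [:: true]; [:: false]; [:: true; true]; [:: true; false]; [:: false; true]; [:: true; true; true]; [:: true; true; false]; [:: true; false; true]; [:: false; true; true]; [:: false; true; false]; [:: true; true; true; false]; [:: true; true; false; true]; [:: true; false; true; true]; [:: true; false; true; false]; [:: false; true; true; false]; [:: false; true; false; true]; [:: true; true; true; false; true]; [:: true; true; false; true; true]; [:: true; true; false; true; false]; [:: true; false; true; true; false]; [:: true; false; true; false; true]; [:: false; true; true; false; true]; [:: false; true; false; true; true]; [:: false; true; false; true; false]; [:: true; true; true; false; true; true]; [:: true; true; true; false; true; false]; [:: true; true; false; true; true; false]; [:: true; true; false; true; false; true]; [:: true; false; true; true; false; true]; [:: true; false; true; false; true; true]; [:: true; false; true; false; true; false]; [:: false; true; true; false; true; false]; [:: false; true; false; true; true; false]; [:: false; true; false; true; false; true]; [:: true; true; true; false; true; false; true]; [:: true; true; false; true; true; false; true]; [:: true; true; false; true; false; true; true]; [:: true; true; false; true; false; true; false]; [:: true; false; true; true; false; true; false]; [:: true; false; true; false; true; true; false]; [:: false; true; true; false; true; false; true]; [:: false; true; false; true; true; false; true]; [:: false; true; false; true; false; true; true]; [:: true; true; true; false; true; false; true; true]; [:: true; true; true; false; true; false; true; false]; [:: true; true; false; true; true; false; true; false]; [:: true; true; false; true; false; true; true; false]; [:: true; false; true; true; false; true; false; true]; [:: true; false; true; false; true; true; false; true]; [:: false; true; true; false; true; false; true; true]; [:: false; true; true; false; true; false; true; false]; [:: false; true; false; true; true; false; true; false];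 [:: false; true; false; true; false; true; true; false]; [:: true; true; true; false; true; false; true; true; false]; [:: true; true; false; true; true; false; true; false; true]; [:: true; true; false; true; false; true; true; false; true]; [:: true; false; true; true; false; true; false; true; true]; [:: true; false; true; true; false; true; false; true; false]; [:: true; false; true; false; true; true; false; true; false]; [:: false; true; true; false; true; false; true; true; true]; [:: false; true; true; false; true; false; true; true; false]; [:: false; true; false; true; true; false; true; false; true]; [:: false; true; false; true; false; true; true; false; true]; [:: true; true; true; false; true; false; true; true; false; true]; [:: true; true; false; true; true; false; true; false; true; true]; [:: true; true; false; true; true; false; true; false; true; false]; [:: true; true; false; true; false; true; true; false; true; false]; [:: true; false; true; true; false; true; false; true; true; true]; [:: true; false; true; true; false; true; false; true; true; false]; [:: true; false; true; false; true; true; false; true; false; true]; [:: false; true; true; false; true; false; true; true; false; true]; [:: false; true; false; true; true; false; true; false; true; true]; [:: false; true; false; true; true; false; true; false; true; false]; [:: false; true; false; true; false; true; true; false; true; true]; [:: false; true; false; true; false; true; true; false; true; false]; [:: true; true; true; false; true; false; true; true; false; true; false]; [:: true; true; false; true; true; false; true; false; true; true; true]; [:: true; true; false; true; true; false; true; false; true; true; false]; [:: true; true; false; true; false; true; true; false; true; false; true]; [:: true; false; true; true; false; true; false; true; true; false; true]; [:: true; false; true; false; true; true; false; true; false; true; true]; [:: false; true; true; false; true; false; true; true; false; true; true]; [:: false; true; true; false; true; false; true; true; false; true; false]; [:: false; true; false; true; true; false; true; false; true; true; false]; [:: false; true; false; true; false; true; true; false; true; true; false]; [:: true; true; true; false;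 true; false; true; true; false; true; false; true]; [:: true; true; false; true; true; false; true; false; true; true; false; true]; [:: true; true; false; true; false; true; true; false; true; false; true; true]; [:: true; false; true; true; false; true; false; true; true; false; true; true]; [:: true; false; true; true; false; true; false; true; true; false; true; false]; [:: true; false; true; false; true; true; false; true; false; true; true; false]; [:: false; true; true; false; true; false; true; true; false; true; true; false]; [:: false; true; false; true; true; false; true; false; true; true; false; true]; [:: false; true; false; true; false; true; true; false; true; true; false; true]; [:: true; true; true; false; true; false; true; true; false; true; false; true; true]; [:: true; true; false; true; true; false; true; false; true; true; false; true; true]; [:: true; true; false; true; true; false; true; false; true; true; false; true; false]; [:: true; true; false; true; false; true; true; false; true; false; true; true; false]; [:: true; false; true; true; false; true; false; true; true; false; true; true; false]; [:: true; false; true; false; true; true; false; true; false; true; true; false; true]; [:: false; true; true; false; true; false; true; true; false; true; true; false; true]; [:: false; true; false; true; true; false; true; false; true; true; false; true; false]; [:: false; true; false; true; false; true; true; false; true; true; false; true; true]; [:: false; true; false; true; false; true; true; false; true; true; false; true; false]; [:: true; true; true; false; true; false; true; true; false; true; false; true; true; false]; [:: true; true; false; true; true; false; true; false; true; true; false; true; true; false]; [:: true; true; false; true; false; true; true; false; true; false; true; true; false; true]; [:: true; false; true; true; false; true; false; true; true; false; true; true; false; true]; [:: true; false; true; false; true; true; false; true; false; true; true; false; true; false]; [:: false; true; true; false; true; false; true; true; false; true; true; false; true; false]; [:: false; true; false; true; true; false; true; false; true; true; false; true; false; true]; [:: true; true; true; false; true; false; true; true; false; true; false; true; true; false; true]; [::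 true; true; false; true; true; false; true; false; true; true; false; true; true; false; true]; [:: true; true; false; true; false; true; true; false; true; false; true; true; false; true; false]; [:: true; false; true; true; false; true; false; true; true; false; true; true; false; true; false]; [:: false; true; true; false; true; false; true; true; false; true; true; false; true; false; true]; [:: false; true; false; true; true; false; true; false; true; true; false; true; false; true; true]; [:: true; true; true; false; true; false; true; true; false; true; false; true; true; false; true; false]; [:: true; true; false; true; true; false; true; false; true; true; false; true; true; false; true; false]].
Definition deds_cubeP : seq (nat * nat) := [:: (0, 0); (0, 3); (1, 0); (2, 3); (3, 0); (4, 3); (5, 0); (6, 0); (7, 3); (8, 0); (9, 0); (10, 3); (11, 3); (12, 0); (13, 0); (14, 3); (15, 2); (16, 0); (17, 0); (18, 0); (19, 3); (20, 2); (21, 0); (22, 0); (23, 0); (24, 3); (25, 1); (26, 3); (27, 2); (28, 0); (29, 0); (30, 0); (31, 3); (32, 3); (33, 2); (34, 0); (35, 0); (36, 0); (37, 0); (38, 3); (39, 3); (40, 2); (41, 0); (42, 0); (43, 0); (44, 0); (45, 3); (46, 3); (47, 2); (48, 0); (49, 0); (50, 0); (51, 3); (52, 3); (53, 2); (54, 2); (55, 0); (56, 0); (57, 0); (58, 3); (59, 3); (60, 1); (61, 3); (62, 0); (63, 0); (64, 0); (65, 0); (66, 3); (67, 3); (68, 1); (69, 3); (70, 0); (71, 0); (72, 0); (73, 3); (74, 0); (75, 3); (76, 3); (77, 1); (78, 3); (79, 0); (80, 0); (81, 0); (82, 0); (84, 2); (85, 3); (86, 0); (87, 0); (88, 0); (89,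 0); (91, 2); (92, 2); (93, 0); (94, 0); (95, 0); (96, 0); (98, 2); (99, 2); (100, 0); (101, 0); (102, 3); (103, 1); (105, 2); (106, 2); (107, 0); (108, 0); (109, 3); (111, 0); (112, 0); (113, 0); (114, 3); (118, 3); (83, 3); (90, 3); (97, 3); (104, 3); (110, 2); (115, 2); (117, 1); (119, 3); (116, 0)].
Definition ts_cubeM : seq nat := [:: 1; 3; 5; 6; 8; 9; 0; 12; 13; 2; 16; 17; 18; 4; 21; 22; 23; 25; 7; 28; 29; 30; 31; 10; 34; 11; 35; 36; 37; 38; 14; 15; 41; 42; 43; 44; 45; 19; 20; 48; 49; 50; 52; 24; 26; 27; 56; 57; 58; 60; 32; 33; 51; 64; 65; 66; 67; 69; 39; 40; 59; 62; 73; 74; 75; 76; 78; 46; 47; 68; 71; 82; 83; 61; 85; 53; 54; 55; 77; 80; 89; 90; 70; 92; 94; 63; 95; 96; 97; 79; 99; 101; 72; 102; 103; 104; 105; 106; 108; 81; 109; 110; 111; 84; 86; 87; 88; 113; 114; 115; 91; 93; 117; 118; 98; 100; 112; 119; 107; 116].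
Definition ta_cubeM : seq nat := [:: 2; 4; 0; 7; 1; 10; 11; 3; 14; 15; 5; 6; 19; 20; 8; 9; 24; 26; 27; 12; 13; 31; 32; 33; 16; 34; 17; 18; 38; 39; 40; 21; 22; 23; 25; 45; 46; 47; 28; 29; 30; 51; 53; 54; 55; 35; 36; 37; 59; 61; 62; 41; 63; 42; 43; 44; 68; 70; 71; 48; 72; 49; 50; 52; 76; 77; 79; 80; 56; 81; 57; 58; 60; 84; 86; 87; 64; 65; 88; 66; 67; 69; 91; 93; 73; 94; 74; 75; 78; 98; 100; 82; 101; 83; 85; 105; 106; 107; 89; 108; 90; 92; 103; 102; 112; 95; 96; 97; 99; 110; 109; 116; 104; 114; 113; 119; 111; 118; 117; 115].
Definition km_cubeM : seq 'I_5 := map o5 [:: 4; 4; 3; 4; 3; 2; 4; 3; 2; 1; 2; 3; 2; 1; 2; 0; 1; 2; 1; 2; 0; 1; 0; 3; 0; 1; 2; 0; 1; 0; 3; 0; 1; 4; 0; 1; 0; 3; 0; 1; 4; 3; 4; 0; 3; 0; 1; 4; 3; 4; 2; 4; 4; 3; 1; 4; 3; 4; 2; 4; 4; 3; 2; 3; 2; 3; 4; 2; 4; 4; 3; 2; 3; 1; 2; 1; 2; 4; 4; 3; 2; 3; 1; 2; 0; 1; 2; 0; 3; 1; 2; 0; 1; 2; 0; 1; 0; 2; 0; 1; 2; 0; 1; 0; 3; 0; 1; 2; 0; 1; 0; 3; 4; 1; 0; 3; 4; 4; 3; 4].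
Definition ws_cubeM : seq (seq bool) := [:: [:: ]; [:: true]; [:: false]; [:: true; true]; [:: true; false]; [:: false; true]; [:: true; true; true]; [:: true; true; false]; [:: true; false; true]; [:: false; true; true]; [:: false; true; false]; [:: true; true; true; false]; [:: true; true; false; true]; [:: true; false; true; true]; [:: true; false; true; false]; [:: false; true; true; false]; [:: false; true; false; true]; [:: true; true; true; false; true]; [:: true; true; false; true; true]; [:: true; true; false; true; false]; [:: true; false; true; true; false]; [:: true; false; true; false; true]; [:: false; true; true; false; true]; [:: false; true; false; true; true]; [:: false; true; false; true; false]; [:: true; true; true; false; true; true]; [:: true; true; true; false; true; false]; [:: true; true; false; true; true; false]; [:: true; true; false; true; false; true]; [:: true; false; true; true; false; true]; [:: true; false; true; false; true; true]; [:: true; false; true; false; true; false]; [:: false; true; true; false; true; false]; [:: false; true; false; true; true; false]; [:: false; true; false; true; false; true]; [:: true; true; true; false; true; false; true]; [:: true; true; false; true; true; false; true]; [:: true; true; false; true; false; true; true]; [:: true; true; false; true; false; true; false]; [:: true; false; true; true; false; true; false]; [:: true; false; true; false; true; true; false]; [:: false; true; true; false; true; false; true]; [:: false; true; false; true; true; false; true]; [:: false; true; false; true; false; true; true]; [:: true; true; true; false; true; false; true; true]; [:: true; true; true; false; true; false; true; false]; [:: true; true; false; true; true; false; true; false]; [:: true; true; false; true; false; true; true; false]; [:: true; false; true; true; false; true; false; true]; [:: true; false; true; false; true; true; false; true]; [:: false; true; true; false; true; false; true; true]; [:: false; true; true; false; true; false; true; false]; [:: false; true; false; true; true; false; true; true];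 [:: false; true; false; true; true; false; true; false]; [:: false; true; false; true; false; true; true; false]; [:: true; true; true; false; true; false; true; true; false]; [:: true; true; false; true; true; false; true; false; true]; [:: true; true; false; true; false; true; true; false; true]; [:: true; false; true; true; false; true; false; true; true]; [:: true; false; true; true; false; true; false; true; false]; [:: true; false; true; false; true; true; false; true; true]; [:: true; false; true; false; true; true; false; true; false]; [:: false; true; true; false; true; false; true; true; false]; [:: false; true; false; true; true; false; true; true; false]; [:: false; true; false; true; true; false; true; false; true]; [:: false; true; false; true; false; true; true; false; true]; [:: true; true; true; false; true; false; true; true; false; true]; [:: true; true; false; true; true; false; true; false; true; true]; [:: true; true; false; true; true; false; true; false; true; false]; [:: true; true; false; true; false; true; true; false; true; true]; [:: true; true; false; true; false; true; true; false; true; false]; [:: true; false; true; true; false; true; false; true; true; false]; [:: true; false; true; false; true; true; false; true; true; false]; [:: false; true; true; false; true; false; true; true; false; true]; [:: false; true; false; true; true; false; true; true; false; true]; [:: false; true; false; true; true; false; true; false; true; true]; [:: false; true; false; true; true; false; true; false; true; false]; [:: false; true; false; true; false; true; true; false; true; false]; [:: true; true; true; false; true; false; true; true; false; true; true]; [:: true; true; true; false; true; false; true; true; false; true; false]; [:: true; true; false; true; true; false; true; false; true; true; false]; [:: true; true; false; true; false; true; true; false; true; true; false]; [:: true; false; true; true; false; true; false; true; true; false; true]; [:: true; false; true; false; true; true; false; true; true; false; true]; [:: false; true; true; false; true; false; true; true; false; true; false]; [:: false; true; false; true; true; false; true; true; false; true; true]; [:: false; true; false; true; true; false; true; true; false;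 true; false]; [:: false; true; false; true; true; false; true; false; true; true; false]; [:: true; true; true; false; true; false; true; true; false; true; true; false]; [:: true; true; false; true; true; false; true; false; true; true; false; true]; [:: true; true; false; true; false; true; true; false; true; true; false; true]; [:: true; false; true; true; false; true; false; true; true; false; true; false]; [:: true; false; true; false; true; true; false; true; true; false; true; true]; [:: true; false; true; false; true; true; false; true; true; false; true; false]; [:: false; true; true; false; true; false; true; true; false; true; false; true]; [:: false; true; false; true; true; false; true; true; false; true; false; true]; [:: false; true; false; true; true; false; true; false; true; true; false; true]; [:: true; true; true; false; true; false; true; true; false; true; true; false; true]; [:: true; true; false; true; true; false; true; false; true; true; false; true; false]; [:: true; true; false; true; false; true; true; false; true; true; false; true; true]; [:: true; true; false; true; false; true; true; false; true; true; false; true; false]; [:: true; false; true; true; false; true; false; true; true; false; true; false; true]; [:: true; false; true; false; true; true; false; true; true; false; true; false; true]; [:: false; true; true; false; true; false; true; true; false; true; false; true; true]; [:: false; true; false; true; true; false; true; true; false; true; false; true; true]; [:: false; true; false; true; true; false; true; true; false; true; false; true; false]; [:: false; true; false; true; true; false; true; false; true; true; false; true; false]; [:: true; true; true; false; true; false; true; true; false; true; true; false; true; false]; [:: true; true; false; true; true; false; true; false; true; true; false; true; false; true]; [:: true; true; false; true; false; true; true; false; true; true; false; true; false; true]; [:: true; false; true; true; false; true; false; true; true; false; true; false; true; true]; [:: true; false; true; false; true; true; false; true; true; false; true; false; true; true]; [:: false; true; false; true; true; false; true; true; false; true; false; true; true; false]; [:: true; true; true; false; true; false; true; true; false; true; true;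 false; true; false; true]; [:: true; true; false; true; true; false; true; false; true; true; false; true; false; true; true]; [:: true; true; false; true; false; true; true; false; true; true; false; true; false; true; true]; [:: true; false; true; false; true; true; false; true; true; false; true; false; true; true; false]; [:: false; true; false; true; true; false; true; true; false; true; false; true; true; false; true]; [:: true; true; true; false; true; false; true; true; false; true; true; false; true; false; true; true]; [:: true; true; false; true; false; true; true; false; true; true; false; true; false; true; true; false]].
Definition deds_cubeM : seq (nat * nat) := [:: (0, 0); (0, 3); (1, 0); (2, 3); (3, 0); (4, 3); (5, 0); (6, 0); (7, 3); (8, 0); (9, 0); (10, 3); (11, 3); (12, 0); (13, 0); (14, 3); (15, 2); (16, 0); (17, 0); (18, 0); (19, 3); (20, 2); (21, 0); (22, 0); (23, 0); (24, 3); (25, 1); (26, 3); (27, 2); (28, 0); (29, 0); (30, 0); (31, 3); (32, 3); (33, 2); (34, 0); (35, 0); (36, 0); (37, 0); (38, 3); (39, 3); (40, 2); (41, 0); (42, 0); (43, 0); (44, 0); (45, 3); (46, 3); (47, 2); (48, 0); (49, 0); (50, 0); (51, 3); (52, 0); (53, 3); (54, 2); (55, 2); (56, 0); (57, 0); (58, 0); (59, 3); (60, 0); (62, 2); (63, 3); (64, 0); (65, 0); (66, 0); (67, 0); (68, 3); (69, 0); (71, 2); (72, 3); (73, 0); (74, 0); (75, 0); (76, 3); (77, 3); (78, 0); (80, 2); (81, 3); (82, 0); (83, 0); (84, 3); (85, 1); (86, 3); (87, 2); (88, 2); (89, 0); (90, 0); (91, 3); (92, 1); (93, 3); (94, 0);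 (95, 0); (96, 0); (97, 0); (98, 3); (99, 1); (100, 3); (101, 0); (104, 0); (105, 3); (106, 3); (107, 3); (108, 0); (111, 0); (115, 0); (118, 1); (61, 3); (70, 3); (79, 3); (103, 1); (110, 1); (114, 1); (117, 0); (102, 0); (109, 0); (112, 2); (113, 0); (116, 2); (119, 2)].
Definition ts_dodP : seq nat := [:: 1; 3; 5; 6; 8; 9; 11; 13; 14; 2; 17; 0; 19; 20; 4; 23; 24; 25; 27; 28; 7; 31; 32; 33; 34; 10; 37; 38; 12; 41; 42; 43; 44; 15; 16; 47; 48; 49; 18; 50; 51; 52; 53; 21; 22; 56; 57; 58; 59; 26; 62; 63; 29; 30; 66; 67; 68; 69; 71; 36; 73; 74; 39; 40; 76; 77; 78; 79; 81; 46; 83; 84; 86; 87; 89; 91; 92; 93; 95; 55; 97; 98; 100; 101; 35; 102; 103; 60; 61; 106; 75; 90; 109; 65; 111; 112; 114; 115; 45; 116; 117; 70; 120; 72; 105; 123; 88; 125; 126; 127; 129; 130; 54; 131; 132; 80; 135; 82; 119; 138; 85; 140; 141; 104; 143; 144; 146; 64; 147; 148; 94; 151; 96; 134; 154; 99; 156; 157; 118; 159; 160; 161; 163; 164; 107; 167; 108; 168; 110; 150; 171; 113; 173; 174; 133; 176; 177; 178; 139; 158; 121; 122; 182; 183; 124; 184; 185; 186; 128; 188; 189; 149; 191; 192; 193; 155; 175; 136; 137; 180; 197; 198; 199; 142; 200; 201; 145; 204; 205; 206; 172; 190; 152; 153; 195; 210; 211; 212; 213; 215; 165; 166; 218; 187;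 203; 169; 170; 208; 220; 221; 222; 223; 225; 181; 227; 228; 217; 230; 231; 232; 233; 234; 236; 196; 238; 179; 239; 240; 162; 241; 216; 243; 244; 246; 209; 248; 194; 249; 250; 251; 214; 254; 256; 257; 219; 259; 207; 260; 261; 262; 224; 226; 253; 266; 229; 268; 269; 202; 270; 271; 272; 235; 237; 264; 276; 277; 252; 279; 280; 242; 281; 245; 247; 274; 285; 286; 263; 287; 267; 278; 255; 258; 283; 292; 293; 273; 294; 265; 289; 296; 291; 297; 282; 298; 275; 288; 299; 290; 284; 295].
Definition ta_dodP : seq nat := [:: 2; 4; 0; 7; 1; 10; 12; 3; 15; 16; 5; 18; 6; 21; 22; 8; 9; 26; 11; 29; 30; 13; 14; 34; 35; 36; 17; 39; 40; 19; 20; 44; 45; 46; 23; 24; 25; 38; 37; 27; 28; 53; 54; 55; 31; 32; 33; 59; 60; 61; 63; 64; 65; 41; 42; 43; 69; 70; 72; 47; 48; 49; 75; 50; 51; 52; 79; 80; 82; 56; 57; 85; 58; 88; 90; 62; 93; 94; 96; 66; 67; 99; 68; 84; 83; 71; 104; 105; 73; 107; 74; 108; 110; 76; 77; 113; 78; 98; 97; 81; 118; 119; 121; 122; 86; 87; 124; 89; 91; 128; 92; 112; 111; 95; 133; 134; 136; 137; 100; 101; 139; 102; 103; 142; 106; 145; 127; 126; 109; 149; 150; 152; 153; 114; 115; 155; 116; 117; 158; 120; 161; 162; 123; 165; 166; 125; 167; 169; 170; 129; 130; 172; 131; 132; 175; 135; 178; 179; 138; 180; 181; 140; 141; 164; 163;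 143; 144; 146; 187; 147; 148; 190; 151; 193; 194; 154; 195; 196; 156; 157; 159; 160; 183; 182; 201; 202; 203; 168; 206; 207; 171; 208; 209; 173; 174; 176; 177; 213; 214; 216; 217; 184; 185; 186; 218; 219; 188; 189; 191; 192; 223; 224; 226; 197; 198; 229; 199; 200; 204; 205; 234; 235; 237; 210; 211; 238; 212; 228; 227; 215; 242; 244; 245; 247; 220; 221; 248; 222; 225; 252; 253; 255; 230; 258; 231; 232; 259; 233; 236; 263; 264; 265; 239; 240; 267; 241; 257; 256; 243; 246; 273; 274; 275; 249; 250; 251; 278; 254; 269; 268; 282; 283; 284; 260; 261; 262; 287; 288; 266; 289; 290; 291; 270; 271; 272; 294; 295; 276; 277; 279; 280; 281; 298; 299; 285; 286; 297; 296; 292; 293].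
Definition km_dodP : seq 'I_5 := map o5 [:: 4; 4; 3; 4; 3; 1; 4; 3; 1; 2; 0; 4; 3; 1; 2; 0; 2; 0; 3; 1; 2; 0; 2; 0; 3; 0; 1; 1; 2; 0; 2; 0; 3; 0; 1; 4; 1; 2; 2; 0; 2; 0; 3; 0; 1; 4; 1; 4; 2; 3; 0; 3; 0; 1; 4; 1; 4; 2; 4; 3; 2; 4; 0; 1; 4; 1; 4; 2; 4; 3; 2; 4; 3; 3; 4; 1; 4; 2; 4; 3; 2; 4; 3; 3; 4; 3; 1; 1; 4; 4; 3; 2; 4; 3; 2; 4; 3; 3; 4; 3; 1; 1; 1; 2; 0; 0; 4; 3; 2; 4; 3; 3; 4; 3; 1; 1; 1; 2; 0; 0; 2; 0; 2; 0; 3; 1; 3; 4; 3; 1; 1; 1; 2; 0; 0; 2; 0; 2; 0; 2; 0; 3; 1; 1; 2; 0; 1; 1; 2; 0; 0; 2; 0; 2; 0; 2; 0; 3; 1; 3; 0; 1; 4; 2; 2; 0; 2; 0; 2; 0; 2; 0; 2; 0; 3; 1; 3; 0; 1; 4; 4; 1; 4; 3; 0; 3; 0; 2; 0; 3; 1; 3; 0; 1; 4; 4; 1; 4; 2; 4; 0; 1; 4; 1; 3; 0; 1; 4; 4; 1; 4; 2; 4; 3; 2; 4; 3; 1; 4; 1; 4; 2; 4; 3; 2; 4; 3; 3; 4; 3; 2; 4; 2; 4; 3; 2; 4; 3; 3; 1; 1; 1; 2; 4; 3; 2; 4; 3; 3; 1; 1; 2; 0; 0; 2; 0; 3; 4;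 3; 3; 1; 1; 2; 0; 0; 2; 0; 2; 0; 1; 1; 1; 2; 0; 0; 2; 0; 3; 1; 3; 0; 2; 0; 0; 2; 0; 3; 1; 4; 4; 1; 2; 0; 3; 1; 4; 4; 3; 1; 4].
Definition ws_dodP : seq (seq bool) := [:: [:: ]; [:: true]; [:: false]; [:: true; true]; [:: true; false]; [:: false; true]; [:: true; true; true]; [:: true; true; false]; [:: true; false; true]; [:: false; true; true]; [:: false; true; false]; [:: true; true; true; true]; [:: true; true; true; false]; [:: true; true; false; true]; [:: true; false; true; true]; [:: true; false; true; false]; [:: false; true; true; false]; [:: false; true; false; true]; [:: true; true; true; true; false]; [:: true; true; true; false; true]; [:: true; true; false; true; true]; [:: true; true; false; true; false]; [:: true; false; true; true; false]; [:: true; false; true; false; true]; [:: false; true; true; false; true]; [:: false; true; false; true; true]; [:: false; true; false; true; false]; [:: true; true; true; true; false; true]; [:: true; true; true; false; true; true]; [:: true; true; true; false; true; false]; [:: true; true; false; true; true; false]; [:: true; true; false; true; false; true]; [:: true; false; true; true; false; true]; [:: true; false; true; false; true; true]; [:: true; false; true; false; true; false]; [:: false; true; true; false; true; false]; [:: false; true; false; true; true; false]; [:: false; true; false; true; false; true]; [:: true; true; true; true; false; true; true]; [:: true; true; true; true; false; true; false]; [:: true; true; true; false; true; true; false]; [:: true; true; true; false; true; false; true]; [:: true; true; false; true; true; false; true]; [:: true; true; false; true; false; true; true]; [:: true; true; false; true; false; true; false]; [:: true; false; true; true; false; true; false]; [:: true; false; true; false; true; true; false]; [:: false; true; true; false;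 true; false; true]; [:: false; true; false; true; true; false; true]; [:: false; true; false; true; false; true; true]; [:: true; true; true; true; false; true; false; true]; [:: true; true; true; false; true; true; false; true]; [:: true; true; true; false; true; false; true; true]; [:: true; true; true; false; true; false; true; false]; [:: true; true; false; true; true; false; true; false]; [:: true; true; false; true; false; true; true; false]; [:: true; false; true; true; false; true; false; true]; [:: true; false; true; false; true; true; false; true]; [:: false; true; true; false; true; false; true; true]; [:: false; true; true; false; true; false; true; false]; [:: false; true; false; true; true; false; true; false]; [:: false; true; false; true; false; true; true; false]; [:: true; true; true; true; false; true; false; true; true]; [:: true; true; true; true; false; true; false; true; false]; [:: true; true; true; false; true; true; false; true; false]; [:: true; true; true; false; true; false; true; true; false]; [:: true; true; false; true; true; false; true; false; true]; [:: true; true; false; true; false; true; true; false; true]; [:: true; false; true; true; false; true; false; true; true]; [:: true; false; true; true; false; true; false; true; false]; [:: true; false; true; false; true; true; false; true; false]; [:: false; true; true; false; true; false; true; true; true]; [:: false; true; true; false; true; false; true; true; false]; [:: false; true; false; true; true; false; true; false; true]; [:: false; true; false; true; false; true; true; false; true]; [:: true; true; true; true; false; true; false; true; true; false]; [:: true; true; true; false; true; true; false; true; false; true]; [:: true; true; true; false; true; false; true; true; false; true]; [:: true; true; false; true; true; false; true; false; true; true]; [:: true; true; false; true; true; false; true; false; true; false]; [:: true; true; false; true; false; true; true; false; true; false]; [:: true; false; true; true; false; true; false; true; true; true]; [:: true; false; true; true; false; true; false; true; true; false]; [:: true; false; true; false; true; true; false; true; false; true]; [:: false; true; true; false; true; false;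 true; true; true; true]; [:: false; true; true; false; true; false; true; true; true; false]; [:: false; true; true; false; true; false; true; true; false; true]; [:: false; true; false; true; true; false; true; false; true; true]; [:: false; true; false; true; true; false; true; false; true; false]; [:: false; true; false; true; false; true; true; false; true; true]; [:: false; true; false; true; false; true; true; false; true; false]; [:: true; true; true; true; false; true; false; true; true; false; true]; [:: true; true; true; false; true; true; false; true; false; true; true]; [:: true; true; true; false; true; true; false; true; false; true; false]; [:: true; true; true; false; true; false; true; true; false; true; false]; [:: true; true; false; true; true; false; true; false; true; true; true]; [:: true; true; false; true; true; false; true; false; true; true; false]; [:: true; true; false; true; false; true; true; false; true; false; true]; [:: true; false; true; true; false; true; false; true; true; true; true]; [:: true; false; true; true; false; true; false; true; true; true; false]; [:: true; false; true; true; false; true; false; true; true; false; true]; [:: true; false; true; false; true; true; false; true; false; true; true]; [:: false; true; true; false; true; false; true; true; true; false; true]; [:: false; true; true; false; true; false; true; true; false; true; true]; [:: false; true; true; false; true; false; true; true; false; true; false]; [:: false; true; false; true; true; false; true; false; true; true; false]; [:: false; true; false; true; false; true; true; false; true; true; true]; [:: false; true; false; true; false; true; true; false; true; true; false]; [:: true; true; true; true; false; true; false; true; true; false; true; false]; [:: true; true; true; false; true; true; false; true; false; true; true; true]; [:: true; true; true; false; true; true; false; true; false; true; true; false]; [:: true; true; true; false; true; false; true; true; false; true; false; true]; [:: true; true; false; true; true; false; true; false; true; true; true; true]; [:: true; true; false; true; true; false; true; false; true; true; true; false]; [:: true; true; false; true; true; false; true; false; true; true; false; true]; [:: true; true; false;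 true; false; true; true; false; true; false; true; true]; [:: true; false; true; true; false; true; false; true; true; true; false; true]; [:: true; false; true; true; false; true; false; true; true; false; true; true]; [:: true; false; true; true; false; true; false; true; true; false; true; false]; [:: true; false; true; false; true; true; false; true; false; true; true; false]; [:: false; true; true; false; true; false; true; true; true; false; true; true]; [:: false; true; true; false; true; false; true; true; true; false; true; false]; [:: false; true; true; false; true; false; true; true; false; true; true; false]; [:: false; true; false; true; true; false; true; false; true; true; false; true]; [:: false; true; false; true; false; true; true; false; true; true; true; false]; [:: false; true; false; true; false; true; true; false; true; true; false; true]; [:: true; true; true; true; false; true; false; true; true; false; true; false; true]; [:: true; true; true; false; true; true; false; true; false; true; true; true; true]; [:: true; true; true; false; true; true; false; true; false; true; true; true; false]; [:: true; true; true; false; true; true; false; true; false; true; true; false; true]; [:: true; true; true; false; true; false; true; true; false; true; false; true; true]; [:: true; true; false; true; true; false; true; false; true; true; true; false; true]; [:: true; true; false; true; true; false; true; false; true; true; false; true; true]; [:: true; true; false; true; true; false; true; false; true; true; false; true; false]; [:: true; true; false; true; false; true; true; false; true; false; true; true; false]; [:: true; false; true; true; false; true; false; true; true; true; false; true; true]; [:: true; false; true; true; false; true; false; true; true; true; false; true; false]; [:: true; false; true; true; false; true; false; true; true; false; true; true; false]; [:: true; false; true; false; true; true; false; true; false; true; true; false; true]; [:: false; true; true; false; true; false; true; true; true; false; true; true; false]; [:: false; true; true; false; true; false; true; true; true; false; true; false; true]; [:: false; true; true; false; true; false; true; true; false; true; true; false; true]; [:: false; true; false; true; true; false; true; false; true;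 true; false; true; false]; [:: false; true; false; true; false; true; true; false; true; true; true; false; true]; [:: false; true; false; true; false; true; true; false; true; true; false; true; true]; [:: false; true; false; true; false; true; true; false; true; true; false; true; false]; [:: true; true; true; true; false; true; false; true; true; false; true; false; true; true]; [:: true; true; true; false; true; true; false; true; false; true; true; true; false; true]; [:: true; true; true; false; true; true; false; true; false; true; true; false; true; true]; [:: true; true; true; false; true; true; false; true; false; true; true; false; true; false]; [:: true; true; true; false; true; false; true; true; false; true; false; true; true; false]; [:: true; true; false; true; true; false; true; false; true; true; true; false; true; true]; [:: true; true; false; true; true; false; true; false; true; true; true; false; true; false]; [:: true; true; false; true; true; false; true; false; true; true; false; true; true; false]; [:: true; true; false; true; false; true; true; false; true; false; true; true; false; true]; [:: true; false; true; true; false; true; false; true; true; true; false; true; true; false]; [:: true; false; true; true; false; true; false; true; true; true; false; true; false; true]; [:: true; false; true; true; false; true; false; true; true; false; true; true; false; true]; [:: true; false; true; false; true; true; false; true; false; true; true; false; true; false]; [:: false; true; true; false; true; false; true; true; true; false; true; true; false; true]; [:: false; true; true; false; true; false; true; true; true; false; true; false; true; true]; [:: false; true; true; false; true; false; true; true; true; false; true; false; true; false]; [:: false; true; true; false; true; false; true; true; false; true; true; false; true; false]; [:: false; true; false; true; true; false; true; false; true; true; false; true; false; true]; [:: false; true; false; true; false; true; true; false; true; true; true; false; true; true]; [:: false; true; false; true; false; true; true; false; true; true; true; false; true; false]; [:: false; true; false; true; false; true; true; false; true; true; false; true; true; false]; [:: false; true; false; true; false; true; true; false; true; true; false; true; false;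 true]; [:: true; true; true; false; true; true; false; true; false; true; true; true; false; true; true]; [:: true; true; true; false; true; true; false; true; false; true; true; true; false; true; false]; [:: true; true; true; false; true; true; false; true; false; true; true; false; true; true; false]; [:: true; true; true; false; true; false; true; true; false; true; false; true; true; false; true]; [:: true; true; false; true; true; false; true; false; true; true; true; false; true; true; false]; [:: true; true; false; true; true; false; true; false; true; true; true; false; true; false; true]; [:: true; true; false; true; true; false; true; false; true; true; false; true; true; false; true]; [:: true; true; false; true; false; true; true; false; true; false; true; true; false; true; false]; [:: true; false; true; true; false; true; false; true; true; true; false; true; true; false; true]; [:: true; false; true; true; false; true; false; true; true; true; false; true; false; true; true]; [:: true; false; true; true; false; true; false; true; true; true; false; true; false; true; false]; [:: true; false; true; true; false; true; false; true; true; false; true; true; false; true; false]; [:: false; true; true; false; true; false; true; true; true; false; true; true; false; true; false]; [:: false; true; true; false; true; false; true; true; true; false; true; false; true; true; false]; [:: false; true; true; false; true; false; true; true; false; true; true; false; true; false; true]; [:: false; true; false; true; true; false; true; false; true; true; false; true; false; true; true]; [:: false; true; false; true; false; true; true; false; true; true; true; false; true; false; true]; [:: false; true; false; true; false; true; true; false; true; true; false; true; true; false; true]; [:: false; true; false; true; false; true; true; false; true; true; false; true; false; true; true]; [:: true; true; true; false; true; true; false; true; false; true; true; true; false; true; true; false]; [:: true; true; true; false; true; true; false; true; false; true; true; true; false; true; false; true]; [:: true; true; true; false; true; true; false; true; false; true; true; false; true; true; false; true]; [:: true; true; true; false; true; false; true; true; false; true; false; true; true; false; true; false]; [:: true; true;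 false; true; true; false; true; false; true; true; true; false; true; true; false; true]; [:: true; true; false; true; true; false; true; false; true; true; true; false; true; false; true; true]; [:: true; true; false; true; true; false; true; false; true; true; true; false; true; false; true; false]; [:: true; true; false; true; true; false; true; false; true; true; false; true; true; false; true; false]; [:: true; false; true; true; false; true; false; true; true; true; false; true; true; false; true; false]; [:: true; false; true; true; false; true; false; true; true; true; false; true; false; true; true; false]; [:: false; true; true; false; true; false; true; true; true; false; true; true; false; true; false; true]; [:: false; true; true; false; true; false; true; true; true; false; true; false; true; true; false; true]; [:: false; true; true; false; true; false; true; true; false; true; true; false; true; false; true; true]; [:: false; true; false; true; false; true; true; false; true; true; true; false; true; false; true; true]; [:: false; true; false; true; false; true; true; false; true; true; true; false; true; false; true; false]; [:: false; true; false; true; false; true; true; false; true; true; false; true; true; false; true; false]; [:: false; true; false; true; false; true; true; false; true; true; false; true; false; true; true; false]; [:: true; true; true; false; true; true; false; true; false; true; true; true; false; true; true; false; true]; [:: true; true; true; false; true; true; false; true; false; true; true; true; false; true; false; true; true]; [:: true; true; true; false; true; true; false; true; false; true; true; true; false; true; false; true; false]; [:: true; true; true; false; true; true; false; true; false; true; true; false; true; true; false; true; false]; [:: true; true; false; true; true; false; true; false; true; true; true; false; true; true; false; true; false]; [:: true; true; false; true; true; false; true; false; true; true; true; false; true; false; true; true; false]; [:: true; false; true; true; false; true; false; true; true; true; false; true; true; false; true; false; true]; [:: true; false; true; true; false; true; false; true; true; true; false; true; false; true; true; false; true]; [:: false; true; true; false; true; false; true; true; true; false; true; true; false; true; false; true;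 true]; [:: false; true; true; false; true; false; true; true; true; false; true; true; false; true; false; true; false]; [:: false; true; true; false; true; false; true; true; true; false; true; false; true; true; false; true; false]; [:: false; true; true; false; true; false; true; true; false; true; true; false; true; false; true; true; true]; [:: false; true; true; false; true; false; true; true; false; true; true; false; true; false; true; true; false]; [:: false; true; false; true; false; true; true; false; true; true; true; false; true; false; true; true; false]; [:: false; true; false; true; false; true; true; false; true; true; false; true; true; false; true; false; true]; [:: true; true; true; false; true; true; false; true; false; true; true; true; false; true; false; true; true; false]; [:: true; true; false; true; true; false; true; false; true; true; true; false; true; true; false; true; false; true]; [:: true; true; false; true; true; false; true; false; true; true; true; false; true; false; true; true; false; true]; [:: true; false; true; true; false; true; false; true; true; true; false; true; true; false; true; false; true; true]; [:: true; false; true; true; false; true; false; true; true; true; false; true; true; false; true; false; true; false]; [:: true; false; true; true; false; true; false; true; true; true; false; true; false; true; true; false; true; false]; [:: false; true; true; false; true; false; true; true; true; false; true; true; false; true; false; true; true; true]; [:: false; true; true; false; true; false; true; true; true; false; true; true; false; true; false; true; true; false]; [:: false; true; true; false; true; false; true; true; true; false; true; false; true; true; false; true; false; true]; [:: false; true; true; false; true; false; true; true; false; true; true; false; true; false; true; true; true; true]; [:: false; true; true; false; true; false; true; true; false; true; true; false; true; false; true; true; true; false]; [:: false; true; false; true; false; true; true; false; true; true; true; false; true; false; true; true; false; true]; [:: false; true; false; true; false; true; true; false; true; true; false; true; true; false; true; false; true; true]; [:: true; true; true; false; true; true; false; true; false; true; true; true; false; true; false; true; true; false; true]; [:: true; true;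 false; true; true; false; true; false; true; true; true; false; true; true; false; true; false; true; true]; [:: true; true; false; true; true; false; true; false; true; true; true; false; true; true; false; true; false; true; false]; [:: true; true; false; true; true; false; true; false; true; true; true; false; true; false; true; true; false; true; false]; [:: true; false; true; true; false; true; false; true; true; true; false; true; true; false; true; false; true; true; true]; [:: true; false; true; true; false; true; false; true; true; true; false; true; true; false; true; false; true; true; false]; [:: true; false; true; true; false; true; false; true; true; true; false; true; false; true; true; false; true; false; true]; [:: false; true; true; false; true; false; true; true; true; false; true; true; false; true; false; true; true; false; true]; [:: false; true; true; false; true; false; true; true; true; false; true; false; true; true; false; true; false; true; true]; [:: false; true; true; false; true; false; true; true; false; true; true; false; true; false; true; true; true; false; true]; [:: false; true; false; true; false; true; true; false; true; true; true; false; true; false; true; true; false; true; false]; [:: false; true; false; true; false; true; true; false; true; true; false; true; true; false; true; false; true; true; true]; [:: false; true; false; true; false; true; true; false; true; true; false; true; true; false; true; false; true; true; false]; [:: true; true; true; false; true; true; false; true; false; true; true; true; false; true; false; true; true; false; true; false]; [:: true; true; false; true; true; false; true; false; true; true; true; false; true; true; false; true; false; true; true; true]; [:: true; true; false; true; true; false; true; false; true; true; true; false; true; true; false; true; false; true; true; false]; [:: true; true; false; true; true; false; true; false; true; true; true; false; true; false; true; true; false; true; false; true]; [:: true; false; true; true; false; true; false; true; true; true; false; true; true; false; true; false; true; true; false; true]; [:: true; false; true; true; false; true; false; true; true; true; false; true; false; true; true; false; true; false; true; true]; [:: false; true; true; false; true; false; true; true; true; false; true; true; false; true; false; true; true; false;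 true; true]; [:: false; true; true; false; true; false; true; true; true; false; true; true; false; true; false; true; true; false; true; false]; [:: false; true; true; false; true; false; true; true; true; false; true; false; true; true; false; true; false; true; true; false]; [:: false; true; true; false; true; false; true; true; false; true; true; false; true; false; true; true; true; false; true; true]; [:: false; true; true; false; true; false; true; true; false; true; true; false; true; false; true; true; true; false; true; false]; [:: false; true; false; true; false; true; true; false; true; true; true; false; true; false; true; true; false; true; false; true]; [:: false; true; false; true; false; true; true; false; true; true; false; true; true; false; true; false; true; true; true; true]; [:: false; true; false; true; false; true; true; false; true; true; false; true; true; false; true; false; true; true; true; false]; [:: true; true; true; false; true; true; false; true; false; true; true; true; false; true; false; true; true; false; true; false; true]; [:: true; true; false; true; true; false; true; false; true; true; true; false; true; true; false; true; false; true; true; false; true]; [:: true; true; false; true; true; false; true; false; true; true; true; false; true; false; true; true; false; true; false; true; true]; [:: true; false; true; true; false; true; false; true; true; true; false; true; true; false; true; false; true; true; false; true; true]; [:: true; false; true; true; false; true; false; true; true; true; false; true; true; false; true; false; true; true; false; true; false]; [:: true; false; true; true; false; true; false; true; true; true; false; true; false; true; true; false; true; false; true; true; false]; [:: false; true; true; false; true; false; true; true; true; false; true; true; false; true; false; true; true; false; true; true; false]; [:: false; true; true; false; true; false; true; true; true; false; true; false; true; true; false; true; false; true; true; false; true]; [:: false; true; true; false; true; false; true; true; false; true; true; false; true; false; true; true; true; false; true; true; false]; [:: false; true; true; false; true; false; true; true; false; true; true; false; true; false; true; true; true; false; true; false; true]; [:: false; true; false; true; false; true; true; false; true; true; true; false;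 true; false; true; true; false; true; false; true; true]; [:: false; true; false; true; false; true; true; false; true; true; false; true; true; false; true; false; true; true; true; false; true]; [:: true; true; true; false; true; true; false; true; false; true; true; true; false; true; false; true; true; false; true; false; true; true]; [:: true; true; false; true; true; false; true; false; true; true; true; false; true; true; false; true; false; true; true; false; true; true]; [:: true; true; false; true; true; false; true; false; true; true; true; false; true; true; false; true; false; true; true; false; true; false]; [:: true; true; false; true; true; false; true; false; true; true; true; false; true; false; true; true; false; true; false; true; true; false]; [:: true; false; true; true; false; true; false; true; true; true; false; true; true; false; true; false; true; true; false; true; true; false]; [:: true; false; true; true; false; true; false; true; true; true; false; true; false; true; true; false; true; false; true; true; false; true]; [:: false; true; true; false; true; false; true; true; true; false; true; true; false; true; false; true; true; false; true; true; false; true]; [:: false; true; true; false; true; false; true; true; true; false; true; false; true; true; false; true; false; true; true; false; true; false]; [:: false; true; true; false; true; false; true; true; false; true; true; false; true; false; true; true; true; false; true; true; false; true]; [:: false; true; true; false; true; false; true; true; false; true; true; false; true; false; true; true; true; false; true; false; true; true]; [:: false; true; false; true; false; true; true; false; true; true; false; true; true; false; true; false; true; true; true; false; true; true]; [:: false; true; false; true; false; true; true; false; true; true; false; true; true; false; true; false; true; true; true; false; true; false]; [:: true; true; true; false; true; true; false; true; false; true; true; true; false; true; false; true; true; false; true; false; true; true; false]; [:: true; true; false; true; true; false; true; false; true; true; true; false; true; true; false; true; false; true; true; false; true; true; false]; [:: true; true; false; true; true; false; true; false; true; true; true; false; true; false; true; true; false; true; false; true; true; false; true]; [:: true; false; true;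 true; false; true; false; true; true; true; false; true; true; false; true; false; true; true; false; true; true; false; true]; [:: true; false; true; true; false; true; false; true; true; true; false; true; false; true; true; false; true; false; true; true; false; true; false]; [:: false; true; true; false; true; false; true; true; true; false; true; true; false; true; false; true; true; false; true; true; false; true; false]; [:: false; true; true; false; true; false; true; true; false; true; true; false; true; false; true; true; true; false; true; true; false; true; false]; [:: false; true; true; false; true; false; true; true; false; true; true; false; true; false; true; true; true; false; true; false; true; true; false]; [:: false; true; false; true; false; true; true; false; true; true; false; true; true; false; true; false; true; true; true; false; true; true; false]; [:: true; true; true; false; true; true; false; true; false; true; true; true; false; true; false; true; true; false; true; false; true; true; false; true]; [:: true; true; false; true; true; false; true; false; true; true; true; false; true; true; false; true; false; true; true; false; true; true; false; true]; [:: true; true; false; true; true; false; true; false; true; true; true; false; true; false; true; true; false; true; false; true; true; false; true; false]; [:: true; false; true; true; false; true; false; true; true; true; false; true; true; false; true; false; true; true; false; true; true; false; true; false]; [:: false; true; true; false; true; false; true; true; false; true; true; false; true; false; true; true; true; false; true; true; false; true; false; true]; [:: false; true; false; true; false; true; true; false; true; true; false; true; true; false; true; false; true; true; true; false; true; true; false; true]; [:: true; true; true; false; true; true; false; true; false; true; true; true; false; true; false; true; true; false; true; false; true; true; false; true; false]; [:: true; true; false; true; true; false; true; false; true; true; true; false; true; true; false; true; false; true; true; false; true; true; false; true; false]].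
Definition deds_dodP : seq (nat * nat) := [:: (0, 0); (0, 3); (1, 0); (2, 3); (3, 0); (4, 3); (5, 0); (6, 0); (7, 3); (8, 0); (9, 0); (10, 3); (11, 0); (12, 3); (13, 0); (14, 0); (15, 3); (16, 2); (17, 0); (18, 3); (19, 0); (20, 0); (21, 3); (22, 2); (23, 0); (24, 0); (25, 0); (26, 3); (27, 0); (28, 0); (29, 3); (30, 2); (31, 0); (32, 0); (33, 0); (34, 3); (35, 3); (36, 2); (38, 1); (39, 3); (40, 2); (41, 0); (42, 0); (43, 0); (44, 3); (45, 3); (46, 2); (47, 0); (48, 0); (49, 0); (50, 0); (51, 0); (52, 0); (53, 3); (54, 3); (55, 2); (56, 0); (57, 0); (58, 0); (59, 3); (60, 3); (61, 2); (62, 0); (63, 3); (64, 3); (65, 2); (66, 0); (67, 0); (68, 0); (69, 3); (70, 3); (71, 0); (72, 3); (73, 0); (74, 0); (76, 0); (77, 0); (78, 0); (79, 3); (80, 3); (81, 0); (82, 3); (84, 1); (85, 3); (86, 0); (87, 0); (88, 3); (89, 0); (91, 0); (92, 0); (93, 3); (94, 3); (95, 0); (96, 3); (98, 1); (99, 3); (100, 0); (101, 0); (102, 0); (103, 0); (105, 2); (106, 0); (107, 3); (108, 3); (109, 0); (110, 3); (112, 1); (113, 3); (114, 0); (115, 0); (116, 0); (117, 0); (119, 2); (120, 0); (121, 3); (122, 2); (123, 0); (124, 3); (125, 0); (127, 1); (128, 3); (129, 0); (130, 0); (131, 0); (132, 0); (134, 2); (135, 0); (136, 3); (137, 2); (138,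 0); (140, 0); (141, 0); (142, 3); (143, 0); (144, 0); (145, 3); (147, 0); (148, 0); (150, 2); (151, 0); (152, 3); (153, 2); (154, 0); (156, 0); (157, 0); (159, 0); (160, 0); (161, 3); (162, 3); (164, 1); (165, 3); (166, 2); (168, 0); (169, 3); (170, 2); (171, 0); (173, 0); (174, 0); (176, 0); (177, 0); (178, 3); (181, 2); (184, 0); (185, 0); (186, 0); (188, 0); (189, 0); (191, 0); (192, 0); (193, 3); (196, 2); (197, 0); (198, 0); (199, 0); (200, 0); (201, 3); (202, 3); (205, 0); (206, 3); (209, 2); (210, 0); (211, 0); (212, 0); (213, 3); (214, 3); (215, 0); (220, 0); (221, 0); (222, 0); (223, 3); (224, 3); (226, 3); (228, 1); (229, 3); (230, 0); (231, 0); (232, 0); (233, 0); (234, 3); (235, 3); (237, 3); (239, 0); (240, 0); (241, 0); (242, 3); (243, 0); (245, 3); (247, 3); (249, 0); (250, 0); (251, 0); (253, 2); (254, 0); (255, 3); (257, 1); (258, 3); (260, 0); (261, 0); (262, 0); (264, 2); (266, 0); (270, 0); (271, 0); (272, 0); (274, 2); (276, 0); (277, 0); (279, 0); (280, 0); (281, 0); (285, 0); (286, 0); (292, 0); (293, 0); (37, 0); (75, 2); (83, 0); (90, 3); (97, 0); (104, 3); (111, 0); (118, 3); (126, 0); (133, 3); (139, 2); (146, 1); (149, 3); (155, 2); (158, 3); (163, 0); (167, 0); (172, 2); (175, 3); (180, 2); (183, 1); (187, 2); (190, 3); (195, 2); (203, 3); (204, 1); (208, 2); (218, 0); (219, 2);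 (227, 0); (244, 3); (252, 3); (256, 0); (263, 3); (267, 2); (273, 3); (278, 3); (283, 2); (289, 2); (179, 3); (182, 0); (194, 3); (207, 3); (217, 2); (225, 1); (236, 1); (238, 0); (246, 1); (248, 0); (259, 0); (265, 2); (275, 2); (282, 3); (284, 2); (287, 3); (288, 2); (294, 3); (295, 2); (298, 3); (299, 3); (216, 3); (269, 1); (296, 1); (297, 0); (268, 0); (290, 2); (291, 2)].
Definition ts_dodM : seq nat := [:: 1; 3; 5; 6; 8; 9; 11; 13; 14; 2; 17; 0; 19; 20; 4; 23; 24; 25; 27; 28; 7; 31; 32; 33; 34; 10; 37; 38; 12; 41; 42; 43; 44; 15; 16; 47; 48; 49; 18; 50; 51; 52; 53; 21; 22; 56; 57; 58; 60; 26; 63; 64; 29; 30; 67; 68; 69; 71; 35; 36; 74; 76; 77; 39; 40; 79; 80; 81; 83; 45; 46; 86; 73; 88; 59; 90; 91; 92; 94; 95; 97; 54; 55; 100; 85; 102; 70; 104; 72; 106; 107; 61; 62; 78; 110; 65; 66; 113; 99; 115; 82; 117; 84; 119; 120; 122; 123; 75; 126; 127; 128; 112; 130; 96; 132; 98; 134; 135; 137; 138; 87; 141; 142; 89; 143; 144; 145; 146; 93; 149; 111; 151; 152; 154; 155; 101; 158; 159; 103; 160; 161; 162; 105; 163; 164; 108; 109; 148; 167; 168; 170; 171; 114; 174; 175; 116; 176; 177; 178; 118; 179; 180; 121; 124; 125; 184; 185; 147; 129; 188; 189; 131; 190; 191; 192; 133; 193; 194; 136; 139; 140; 198; 183; 199;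 200; 202; 204; 205; 206; 150; 207; 208; 153; 156; 157; 212; 197; 213; 214; 216; 165; 166; 219; 186; 203; 221; 169; 172; 173; 225; 211; 226; 227; 229; 181; 182; 215; 218; 233; 201; 235; 187; 236; 224; 237; 238; 240; 195; 196; 228; 231; 244; 245; 217; 247; 248; 249; 251; 209; 210; 239; 242; 255; 256; 230; 258; 260; 261; 220; 222; 223; 250; 253; 265; 266; 241; 268; 270; 232; 271; 272; 234; 273; 274; 275; 252; 277; 279; 243; 280; 281; 282; 246; 283; 284; 285; 287; 254; 288; 289; 290; 257; 259; 262; 263; 264; 293; 294; 295; 267; 269; 292; 297; 298; 276; 278; 291; 299; 286; 296].
Definition ta_dodM : seq nat := [:: 2; 4; 0; 7; 1; 10; 12; 3; 15; 16; 5; 18; 6; 21; 22; 8; 9; 26; 11; 29; 30; 13; 14; 34; 35; 36; 17; 39; 40; 19; 20; 44; 45; 46; 23; 24; 25; 38; 37; 27; 28; 53; 54; 55; 31; 32; 33; 59; 61; 62; 64; 65; 66; 41; 42; 43; 70; 72; 73; 47; 75; 48; 49; 78; 50; 51; 52; 82; 84; 85; 56; 87; 57; 58; 89; 60; 92; 93; 63; 96; 98; 99; 67; 101; 68; 69; 103; 71; 105; 74; 108; 109; 76; 77; 111; 112; 79; 114; 80; 81; 116; 83; 118; 86; 121; 88; 124; 125; 90; 91; 129; 94; 95; 131; 97; 133; 100; 136; 102; 139; 140; 104; 123; 122; 106; 107; 146; 147; 148; 110; 150; 113; 153; 115; 156; 157; 117; 138; 137; 119; 120; 142; 141; 164; 165;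 166; 126; 127; 128; 169; 130; 172; 173; 132; 155; 154; 134; 135; 159; 158; 180; 181; 182; 183; 143; 144; 145; 186; 187; 149; 171; 170; 151; 152; 175; 174; 194; 195; 196; 197; 160; 161; 162; 163; 201; 203; 167; 168; 189; 188; 208; 209; 210; 211; 176; 177; 178; 179; 215; 217; 218; 184; 220; 185; 221; 222; 223; 224; 190; 191; 192; 193; 228; 230; 231; 198; 232; 199; 200; 234; 202; 204; 205; 206; 207; 239; 241; 242; 212; 243; 213; 214; 216; 246; 219; 249; 250; 252; 253; 225; 254; 226; 227; 229; 257; 259; 233; 262; 263; 235; 236; 264; 237; 238; 240; 267; 269; 244; 270; 245; 261; 260; 247; 248; 251; 276; 278; 255; 279; 256; 258; 272; 271; 284; 285; 286; 265; 287; 266; 268; 281; 280; 291; 292; 273; 274; 275; 277; 289; 288; 296; 282; 283; 294; 293; 299; 290; 298; 297; 295].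
Definition km_dodM : seq 'I_5 := map o5 [:: 4; 4; 3; 4; 3; 2; 4; 3; 2; 1; 2; 4; 3; 2; 1; 2; 0; 1; 3; 2; 1; 2; 0; 1; 0; 3; 0; 2; 1; 2; 0; 1; 0; 3; 0; 1; 4; 0; 1; 2; 0; 1; 0; 3; 0; 1; 4; 3; 4; 0; 1; 0; 3; 0; 1; 4; 3; 4; 2; 4; 4; 3; 1; 3; 0; 1; 4; 3; 4; 2; 4; 4; 3; 2; 4; 3; 2; 3; 4; 3; 4; 2; 4; 4; 3; 2; 4; 3; 1; 3; 2; 1; 2; 4; 4; 2; 4; 4; 3; 2; 4; 3; 1; 3; 2; 0; 2; 1; 2; 0; 4; 3; 2; 4; 3; 1; 3; 2; 0; 2; 1; 2; 0; 1; 2; 0; 1; 0; 4; 3; 1; 3; 2; 0; 2; 1; 2; 0; 1; 2; 0; 1; 0; 1; 0; 3; 0; 1; 3; 2; 0; 2; 1; 2; 0; 1; 2; 0; 1; 0; 1; 0; 3; 3; 0; 1; 4; 2; 1; 2; 0; 1; 2; 0; 1; 0; 1; 0; 3; 3; 0; 1; 4; 4; 3; 4; 2; 0; 1; 0; 1; 0; 3; 3; 0; 1; 4; 4; 3; 4; 2; 4; 4; 3; 1; 0; 3; 3; 0; 1; 4; 4; 3; 4; 2; 4; 4; 3; 2; 4; 3; 0; 1; 4; 4; 3; 4; 2; 4; 4; 3; 2; 3; 1; 3; 2; 3; 4; 2; 4; 4; 3; 2; 3; 1; 2; 0; 2; 1; 2; 4; 4; 3; 2; 3; 1; 2; 0;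 1; 2; 0; 1; 2; 0; 3; 1; 2; 0; 1; 2; 0; 1; 0; 1; 0; 2; 0; 1; 2; 0; 1; 0; 3; 3; 0; 1; 2; 0; 1; 0; 3; 4; 4; 1; 0; 3; 4; 4; 3; 4].
Definition ws_dodM : seq (seq bool) := [:: [:: ]; [:: true]; [:: false]; [:: true; true]; [:: true; false]; [:: false; true]; [:: true; true; true]; [:: true; true; false]; [:: true; false; true]; [:: false; true; true]; [:: false; true; false]; [:: true; true; true; true]; [:: true; true; true; false]; [:: true; true; false; true]; [:: true; false; true; true]; [:: true; false; true; false]; [:: false; true; true; false]; [:: false; true; false; true]; [:: true; true; true; true; false]; [:: true; true; true; false; true]; [:: true; true; false; true; true]; [:: true; true; false; true; false]; [:: true; false; true; true; false]; [:: true; false; true; false; true]; [:: false; true; true; false; true]; [:: false; true; false; true; true]; [:: false; true; false; true; false]; [:: true; true; true; true; false; true]; [:: true; true; true; false; true; true]; [:: true; true; true; false; true; false]; [:: true; true; false; true; true; false]; [:: true; true; false; true; false; true]; [:: true; false; true; true; false; true]; [:: true; false; true; false; true; true]; [:: true; false; true; false; true; false]; [:: false; true; true; false; true; false]; [:: false; true; false; true; true; false]; [:: false; true; false; true; false; true]; [:: true; true; true; true; false; true; true]; [:: true; true; true; true; false; true; false]; [:: true; true; true; false; true; true; false]; [:: true; true; true; false; true; false; true]; [:: true; true; false; true; true; false; true]; [:: true; true; false; true; false; true; true]; [:: true; true; false; true; false; true; false]; [:: true; false; true; true; false; true; false]; [:: true; false; true; false; true; true; false]; [:: false; true; true; false;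 true; false; true]; [:: false; true; false; true; true; false; true]; [:: false; true; false; true; false; true; true]; [:: true; true; true; true; false; true; false; true]; [:: true; true; true; false; true; true; false; true]; [:: true; true; true; false; true; false; true; true]; [:: true; true; true; false; true; false; true; false]; [:: true; true; false; true; true; false; true; false]; [:: true; true; false; true; false; true; true; false]; [:: true; false; true; true; false; true; false; true]; [:: true; false; true; false; true; true; false; true]; [:: false; true; true; false; true; false; true; true]; [:: false; true; true; false; true; false; true; false]; [:: false; true; false; true; true; false; true; true]; [:: false; true; false; true; true; false; true; false]; [:: false; true; false; true; false; true; true; false]; [:: true; true; true; true; false; true; false; true; true]; [:: true; true; true; true; false; true; false; true; false]; [:: true; true; true; false; true; true; false; true; false]; [:: true; true; true; false; true; false; true; true; false]; [:: true; true; false; true; true; false; true; false; true]; [:: true; true; false; true; false; true; true; false; true]; [:: true; false; true; true; false; true; false; true; true]; [:: true; false; true; true; false; true; false; true; false]; [:: true; false; true; false; true; true; false; true; true]; [:: true; false; true; false; true; true; false; true; false]; [:: false; true; true; false; true; false; true; true; false]; [:: false; true; false; true; true; false; true; true; true]; [:: false; true; false; true; true; false; true; true; false]; [:: false; true; false; true; true; false; true; false; true]; [:: false; true; false; true; false; true; true; false; true]; [:: true; true; true; true; false; true; false; true; true; false]; [:: true; true; true; false; true; true; false; true; false; true]; [:: true; true; true; false; true; false; true; true; false; true]; [:: true; true; false; true; true; false; true; false; true; true]; [:: true; true; false; true; true; false; true; false; true; false]; [:: true; true; false; true; false; true; true; false; true; true]; [:: true; true; false; true; false; true; true; false; true; false];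 [:: true; false; true; true; false; true; false; true; true; false]; [:: true; false; true; false; true; true; false; true; true; true]; [:: true; false; true; false; true; true; false; true; true; false]; [:: false; true; true; false; true; false; true; true; false; true]; [:: false; true; false; true; true; false; true; true; true; false]; [:: false; true; false; true; true; false; true; true; false; true]; [:: false; true; false; true; true; false; true; false; true; true]; [:: false; true; false; true; true; false; true; false; true; false]; [:: false; true; false; true; false; true; true; false; true; false]; [:: true; true; true; true; false; true; false; true; true; false; true]; [:: true; true; true; false; true; true; false; true; false; true; true]; [:: true; true; true; false; true; true; false; true; false; true; false]; [:: true; true; true; false; true; false; true; true; false; true; true]; [:: true; true; true; false; true; false; true; true; false; true; false]; [:: true; true; false; true; true; false; true; false; true; true; false]; [:: true; true; false; true; false; true; true; false; true; true; true]; [:: true; true; false; true; false; true; true; false; true; true; false]; [:: true; false; true; true; false; true; false; true; true; false; true]; [:: true; false; true; false; true; true; false; true; true; true; false]; [:: true; false; true; false; true; true; false; true; true; false; true]; [:: false; true; true; false; true; false; true; true; false; true; false]; [:: false; true; false; true; true; false; true; true; true; false; true]; [:: false; true; false; true; true; false; true; true; false; true; true]; [:: false; true; false; true; true; false; true; true; false; true; false]; [:: false; true; false; true; true; false; true; false; true; true; false]; [:: true; true; true; true; false; true; false; true; true; false; true; true]; [:: true; true; true; true; false; true; false; true; true; false; true; false]; [:: true; true; true; false; true; true; false; true; false; true; true; false]; [:: true; true; true; false; true; false; true; true; false; true; true; true]; [:: true; true; true; false; true; false; true; true; false; true; true; false]; [:: true; true; false; true; true; false; true; false; true; true; false; true];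 [:: true; true; false; true; false; true; true; false; true; true; true; false]; [:: true; true; false; true; false; true; true; false; true; true; false; true]; [:: true; false; true; true; false; true; false; true; true; false; true; false]; [:: true; false; true; false; true; true; false; true; true; true; false; true]; [:: true; false; true; false; true; true; false; true; true; false; true; true]; [:: true; false; true; false; true; true; false; true; true; false; true; false]; [:: false; true; true; false; true; false; true; true; false; true; false; true]; [:: false; true; false; true; true; false; true; true; true; false; true; true]; [:: false; true; false; true; true; false; true; true; true; false; true; false]; [:: false; true; false; true; true; false; true; true; false; true; true; false]; [:: false; true; false; true; true; false; true; true; false; true; false; true]; [:: false; true; false; true; true; false; true; false; true; true; false; true]; [:: true; true; true; true; false; true; false; true; true; false; true; true; true]; [:: true; true; true; true; false; true; false; true; true; false; true; true; false]; [:: true; true; true; false; true; true; false; true; false; true; true; false; true]; [:: true; true; true; false; true; false; true; true; false; true; true; true; false]; [:: true; true; true; false; true; false; true; true; false; true; true; false; true]; [:: true; true; false; true; true; false; true; false; true; true; false; true; false]; [:: true; true; false; true; false; true; true; false; true; true; true; false; true]; [:: true; true; false; true; false; true; true; false; true; true; false; true; true]; [:: true; true; false; true; false; true; true; false; true; true; false; true; false]; [:: true; false; true; true; false; true; false; true; true; false; true; false; true]; [:: true; false; true; false; true; true; false; true; true; true; false; true; true]; [:: true; false; true; false; true; true; false; true; true; true; false; true; false]; [:: true; false; true; false; true; true; false; true; true; false; true; true; false]; [:: true; false; true; false; true; true; false; true; true; false; true; false; true]; [:: false; true; true; false; true; false; true; true; false; true; false; true; true]; [:: false; true; false; true; true;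 false; true; true; true; false; true; false; true]; [:: false; true; false; true; true; false; true; true; false; true; true; false; true]; [:: false; true; false; true; true; false; true; true; false; true; false; true; true]; [:: false; true; false; true; true; false; true; true; false; true; false; true; false]; [:: false; true; false; true; true; false; true; false; true; true; false; true; false]; [:: true; true; true; true; false; true; false; true; true; false; true; true; true; false]; [:: true; true; true; true; false; true; false; true; true; false; true; true; false; true]; [:: true; true; true; false; true; true; false; true; false; true; true; false; true; false]; [:: true; true; true; false; true; false; true; true; false; true; true; true; false; true]; [:: true; true; true; false; true; false; true; true; false; true; true; false; true; true]; [:: true; true; true; false; true; false; true; true; false; true; true; false; true; false]; [:: true; true; false; true; true; false; true; false; true; true; false; true; false; true]; [:: true; true; false; true; false; true; true; false; true; true; true; false; true; true]; [:: true; true; false; true; false; true; true; false; true; true; true; false; true; false]; [:: true; true; false; true; false; true; true; false; true; true; false; true; true; false]; [:: true; true; false; true; false; true; true; false; true; true; false; true; false; true]; [:: true; false; true; true; false; true; false; true; true; false; true; false; true; true]; [:: true; false; true; false; true; true; false; true; true; true; false; true; false; true]; [:: true; false; true; false; true; true; false; true; true; false; true; true; false; true]; [:: true; false; true; false; true; true; false; true; true; false; true; false; true; true]; [:: false; true; false; true; true; false; true; true; true; false; true; false; true; true]; [:: false; true; false; true; true; false; true; true; true; false; true; false; true; false]; [:: false; true; false; true; true; false; true; true; false; true; true; false; true; false]; [:: false; true; false; true; true; false; true; true; false; true; false; true; true; false]; [:: true; true; true; true; false; true; false; true; true; false; true; true; true; false; true]; [:: true; true; true; true; false; true; false; true; true;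 false; true; true; false; true; true]; [:: true; true; true; true; false; true; false; true; true; false; true; true; false; true; false]; [:: true; true; true; false; true; true; false; true; false; true; true; false; true; false; true]; [:: true; true; true; false; true; false; true; true; false; true; true; true; false; true; true]; [:: true; true; true; false; true; false; true; true; false; true; true; true; false; true; false]; [:: true; true; true; false; true; false; true; true; false; true; true; false; true; true; false]; [:: true; true; true; false; true; false; true; true; false; true; true; false; true; false; true]; [:: true; true; false; true; true; false; true; false; true; true; false; true; false; true; true]; [:: true; true; false; true; false; true; true; false; true; true; true; false; true; false; true]; [:: true; true; false; true; false; true; true; false; true; true; false; true; true; false; true]; [:: true; true; false; true; false; true; true; false; true; true; false; true; false; true; true]; [:: true; false; true; false; true; true; false; true; true; true; false; true; false; true; true]; [:: true; false; true; false; true; true; false; true; true; true; false; true; false; true; false]; [:: true; false; true; false; true; true; false; true; true; false; true; true; false; true; false]; [:: true; false; true; false; true; true; false; true; true; false; true; false; true; true; false]; [:: false; true; false; true; true; false; true; true; true; false; true; false; true; true; false]; [:: false; true; false; true; true; false; true; true; false; true; true; false; true; false; true]; [:: false; true; false; true; true; false; true; true; false; true; false; true; true; false; true]; [:: true; true; true; true; false; true; false; true; true; false; true; true; true; false; true; false]; [:: true; true; true; true; false; true; false; true; true; false; true; true; false; true; true; false]; [:: true; true; true; true; false; true; false; true; true; false; true; true; false; true; false; true]; [:: true; true; true; false; true; true; false; true; false; true; true; false; true; false; true; true]; [:: true; true; true; false; true; false; true; true; false; true; true; true; false; true; false; true]; [:: true; true; true; false; true; false; true; true; false; true; true; false; true;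 true; false; true]; [:: true; true; true; false; true; false; true; true; false; true; true; false; true; false; true; true]; [:: true; true; false; true; false; true; true; false; true; true; true; false; true; false; true; true]; [:: true; true; false; true; false; true; true; false; true; true; true; false; true; false; true; false]; [:: true; true; false; true; false; true; true; false; true; true; false; true; true; false; true; false]; [:: true; true; false; true; false; true; true; false; true; true; false; true; false; true; true; false]; [:: true; false; true; false; true; true; false; true; true; true; false; true; false; true; true; false]; [:: true; false; true; false; true; true; false; true; true; false; true; true; false; true; false; true]; [:: false; true; false; true; true; false; true; true; true; false; true; false; true; true; false; true]; [:: false; true; false; true; true; false; true; true; false; true; true; false; true; false; true; true]; [:: false; true; false; true; true; false; true; true; false; true; true; false; true; false; true; false]; [:: false; true; false; true; true; false; true; true; false; true; false; true; true; false; true; true]; [:: false; true; false; true; true; false; true; true; false; true; false; true; true; false; true; false]; [:: true; true; true; true; false; true; false; true; true; false; true; true; true; false; true; false; true]; [:: true; true; true; true; false; true; false; true; true; false; true; true; false; true; true; false; true]; [:: true; true; true; true; false; true; false; true; true; false; true; true; false; true; false; true; true]; [:: true; true; true; false; true; false; true; true; false; true; true; true; false; true; false; true; true]; [:: true; true; true; false; true; false; true; true; false; true; true; true; false; true; false; true; false]; [:: true; true; true; false; true; false; true; true; false; true; true; false; true; true; false; true; false]; [:: true; true; true; false; true; false; true; true; false; true; true; false; true; false; true; true; false]; [:: true; true; false; true; false; true; true; false; true; true; true; false; true; false; true; true; false]; [:: true; true; false; true; false; true; true; false; true; true; false; true; true; false; true; false; true]; [:: true; false; true; false; true; true; false; true;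 true; true; false; true; false; true; true; false; true]; [:: true; false; true; false; true; true; false; true; true; false; true; true; false; true; false; true; true]; [:: true; false; true; false; true; true; false; true; true; false; true; true; false; true; false; true; false]; [:: false; true; false; true; true; false; true; true; true; false; true; false; true; true; false; true; true]; [:: false; true; false; true; true; false; true; true; true; false; true; false; true; true; false; true; false]; [:: false; true; false; true; true; false; true; true; false; true; true; false; true; false; true; true; false]; [:: false; true; false; true; true; false; true; true; false; true; false; true; true; false; true; true; true]; [:: false; true; false; true; true; false; true; true; false; true; false; true; true; false; true; true; false]; [:: true; true; true; true; false; true; false; true; true; false; true; true; true; false; true; false; true; false]; [:: true; true; true; true; false; true; false; true; true; false; true; true; false; true; true; false; true; false]; [:: true; true; true; true; false; true; false; true; true; false; true; true; false; true; false; true; true; false]; [:: true; true; true; false; true; false; true; true; false; true; true; true; false; true; false; true; true; false]; [:: true; true; true; false; true; false; true; true; false; true; true; false; true; true; false; true; false; true]; [:: true; true; false; true; false; true; true; false; true; true; true; false; true; false; true; true; false; true]; [:: true; true; false; true; false; true; true; false; true; true; false; true; true; false; true; false; true; true]; [:: true; true; false; true; false; true; true; false; true; true; false; true; true; false; true; false; true; false]; [:: true; false; true; false; true; true; false; true; true; true; false; true; false; true; true; false; true; true]; [:: true; false; true; false; true; true; false; true; true; true; false; true; false; true; true; false; true; false]; [:: true; false; true; false; true; true; false; true; true; false; true; true; false; true; false; true; true; false]; [:: false; true; false; true; true; false; true; true; true; false; true; false; true; true; false; true; true; false]; [:: false; true; false; true; true; false; true; true; false; true; true; false; true; false; true; true;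 false; true]; [:: false; true; false; true; true; false; true; true; false; true; false; true; true; false; true; true; true; false]; [:: false; true; false; true; true; false; true; true; false; true; false; true; true; false; true; true; false; true]; [:: true; true; true; true; false; true; false; true; true; false; true; true; false; true; true; false; true; false; true]; [:: true; true; true; false; true; false; true; true; false; true; true; true; false; true; false; true; true; false; true]; [:: true; true; true; false; true; false; true; true; false; true; true; false; true; true; false; true; false; true; true]; [:: true; true; true; false; true; false; true; true; false; true; true; false; true; true; false; true; false; true; false]; [:: true; true; false; true; false; true; true; false; true; true; true; false; true; false; true; true; false; true; true]; [:: true; true; false; true; false; true; true; false; true; true; true; false; true; false; true; true; false; true; false]; [:: true; true; false; true; false; true; true; false; true; true; false; true; true; false; true; false; true; true; false]; [:: true; false; true; false; true; true; false; true; true; true; false; true; false; true; true; false; true; true; false]; [:: true; false; true; false; true; true; false; true; true; false; true; true; false; true; false; true; true; false; true]; [:: false; true; false; true; true; false; true; true; true; false; true; false; true; true; false; true; true; false; true]; [:: false; true; false; true; true; false; true; true; false; true; true; false; true; false; true; true; false; true; false]; [:: false; true; false; true; true; false; true; true; false; true; false; true; true; false; true; true; true; false; true]; [:: false; true; false; true; true; false; true; true; false; true; false; true; true; false; true; true; false; true; true]; [:: false; true; false; true; true; false; true; true; false; true; false; true; true; false; true; true; false; true; false]; [:: true; true; true; true; false; true; false; true; true; false; true; true; false; true; true; false; true; false; true; false]; [:: true; true; true; false; true; false; true; true; false; true; true; true; false; true; false; true; true; false; true; true]; [:: true; true; true; false; true; false; true; true; false; true; true; true; false; true; false; true; true; false;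 true; false]; [:: true; true; true; false; true; false; true; true; false; true; true; false; true; true; false; true; false; true; true; false]; [:: true; true; false; true; false; true; true; false; true; true; true; false; true; false; true; true; false; true; true; false]; [:: true; true; false; true; false; true; true; false; true; true; false; true; true; false; true; false; true; true; false; true]; [:: true; false; true; false; true; true; false; true; true; true; false; true; false; true; true; false; true; true; false; true]; [:: true; false; true; false; true; true; false; true; true; false; true; true; false; true; false; true; true; false; true; false]; [:: false; true; false; true; true; false; true; true; true; false; true; false; true; true; false; true; true; false; true; true]; [:: false; true; false; true; true; false; true; true; true; false; true; false; true; true; false; true; true; false; true; false]; [:: false; true; false; true; true; false; true; true; false; true; true; false; true; false; true; true; false; true; false; true]; [:: false; true; false; true; true; false; true; true; false; true; false; true; true; false; true; true; true; false; true; true]; [:: false; true; false; true; true; false; true; true; false; true; false; true; true; false; true; true; true; false; true; false]; [:: false; true; false; true; true; false; true; true; false; true; false; true; true; false; true; true; false; true; true; false]; [:: true; true; true; false; true; false; true; true; false; true; true; true; false; true; false; true; true; false; true; true; false]; [:: true; true; true; false; true; false; true; true; false; true; true; false; true; true; false; true; false; true; true; false; true]; [:: true; true; false; true; false; true; true; false; true; true; true; false; true; false; true; true; false; true; true; false; true]; [:: true; true; false; true; false; true; true; false; true; true; false; true; true; false; true; false; true; true; false; true; false]; [:: true; false; true; false; true; true; false; true; true; true; false; true; false; true; true; false; true; true; false; true; true]; [:: true; false; true; false; true; true; false; true; true; true; false; true; false; true; true; false; true; true; false; true; false]; [:: true; false; true; false; true; true; false; true; true; false; true; true; false; true; false; true;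 true; false; true; false; true]; [:: false; true; false; true; true; false; true; true; true; false; true; false; true; true; false; true; true; false; true; false; true]; [:: false; true; false; true; true; false; true; true; false; true; true; false; true; false; true; true; false; true; false; true; true]; [:: false; true; false; true; true; false; true; true; false; true; false; true; true; false; true; true; true; false; true; false; true]; [:: false; true; false; true; true; false; true; true; false; true; false; true; true; false; true; true; false; true; true; false; true]; [:: true; true; true; false; true; false; true; true; false; true; true; true; false; true; false; true; true; false; true; true; false; true]; [:: true; true; true; false; true; false; true; true; false; true; true; false; true; true; false; true; false; true; true; false; true; false]; [:: true; true; false; true; false; true; true; false; true; true; true; false; true; false; true; true; false; true; true; false; true; true]; [:: true; true; false; true; false; true; true; false; true; true; true; false; true; false; true; true; false; true; true; false; true; false]; [:: true; true; false; true; false; true; true; false; true; true; false; true; true; false; true; false; true; true; false; true; false; true]; [:: true; false; true; false; true; true; false; true; true; true; false; true; false; true; true; false; true; true; false; true; false; true]; [:: true; false; true; false; true; true; false; true; true; false; true; true; false; true; false; true; true; false; true; false; true; true]; [:: false; true; false; true; true; false; true; true; true; false; true; false; true; true; false; true; true; false; true; false; true; true]; [:: false; true; false; true; true; false; true; true; false; true; false; true; true; false; true; true; true; false; true; false; true; true]; [:: false; true; false; true; true; false; true; true; false; true; false; true; true; false; true; true; true; false; true; false; true; false]; [:: false; true; false; true; true; false; true; true; false; true; false; true; true; false; true; true; false; true; true; false; true; false]; [:: true; true; true; false; true; false; true; true; false; true; true; true; false; true; false; true; true; false; true; true; false; true; false]; [:: true; true; true; false; true; false; true; true; false; true; true; false;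 true; true; false; true; false; true; true; false; true; false; true]; [:: true; true; false; true; false; true; true; false; true; true; true; false; true; false; true; true; false; true; true; false; true; false; true]; [:: true; true; false; true; false; true; true; false; true; true; false; true; true; false; true; false; true; true; false; true; false; true; true]; [:: true; false; true; false; true; true; false; true; true; true; false; true; false; true; true; false; true; true; false; true; false; true; true]; [:: false; true; false; true; true; false; true; true; true; false; true; false; true; true; false; true; true; false; true; false; true; true; false]; [:: false; true; false; true; true; false; true; true; false; true; false; true; true; false; true; true; true; false; true; false; true; true; false]; [:: true; true; true; false; true; false; true; true; false; true; true; true; false; true; false; true; true; false; true; true; false; true; false; true]; [:: true; true; true; false; true; false; true; true; false; true; true; false; true; true; false; true; false; true; true; false; true; false; true; true]; [:: true; true; false; true; false; true; true; false; true; true; true; false; true; false; true; true; false; true; true; false; true; false; true; true]; [:: true; false; true; false; true; true; false; true; true; true; false; true; false; true; true; false; true; true; false; true; false; true; true; false]; [:: false; true; false; true; true; false; true; true; false; true; false; true; true; false; true; true; true; false; true; false; true; true; false; true]; [:: true; true; true; false; true; false; true; true; false; true; true; true; false; true; false; true; true; false; true; true; false; true; false; true; true]; [:: true; true; false; true; false; true; true; false; true; true; true; false; true; false; true; true; false; true; true; false; true; false; true; true; false]].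
Definition deds_dodM : seq (nat * nat) := [:: (0, 0); (0, 3); (1, 0); (2, 3); (3, 0); (4, 3); (5, 0); (6, 0); (7, 3); (8, 0); (9, 0); (10, 3); (11, 0); (12, 3); (13, 0); (14, 0); (15, 3); (16, 2); (17, 0); (18, 3); (19, 0); (20, 0); (21, 3); (22, 2); (23, 0); (24, 0); (25, 0); (26, 3); (27, 0); (28, 0); (29, 3); (30, 2); (31, 0); (32, 0); (33, 0); (34, 3); (35, 3); (36, 2); (38, 1); (39, 3); (40, 2); (41, 0); (42, 0); (43, 0); (44, 3); (45, 3); (46, 2); (47, 0); (48, 0); (49, 0); (50, 0); (51, 0); (52, 0); (53, 3); (54, 3); (55, 2); (56, 0); (57, 0); (58, 0); (59, 3); (60, 0); (61, 3); (62, 2); (63, 0); (64, 3); (65, 3); (66, 2); (67, 0); (68, 0); (69, 0); (70, 3); (71, 0); (73, 2); (74, 0); (75, 3); (76, 0); (77, 0); (79, 0); (80, 0); (81, 0); (82, 3); (83, 0); (85, 2); (86, 0); (87, 3); (88, 0); (89, 3); (90, 0); (91, 0); (92, 3); (94, 0); (95, 0); (96, 3); (97, 0); (99, 2); (100, 0); (101, 3); (102, 0); (103, 3); (104, 0); (105, 3); (106, 0); (107, 0); (108, 3); (109, 2); (110, 0); (112, 2); (113, 0); (114, 3); (115, 0); (116, 3); (117, 0); (118, 3); (119, 0); (120, 0); (121, 3); (123, 1); (124, 3); (125, 2); (126, 0); (127, 0); (128, 0); (129, 3); (130, 0); (131, 3); (132, 0); (133, 3); (134, 0); (135, 0); (136,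 3); (138, 1); (139, 3); (140, 2); (143, 0); (144, 0); (145, 0); (146, 3); (149, 0); (150, 3); (151, 0); (152, 0); (153, 3); (155, 1); (156, 3); (157, 2); (160, 0); (161, 0); (162, 0); (163, 0); (164, 3); (165, 3); (166, 2); (167, 0); (168, 0); (169, 3); (171, 1); (172, 3); (173, 2); (176, 0); (177, 0); (178, 0); (179, 0); (180, 3); (181, 3); (182, 2); (184, 0); (185, 0); (187, 2); (190, 0); (191, 0); (192, 0); (193, 0); (194, 3); (195, 3); (196, 2); (198, 0); (199, 0); (200, 0); (201, 3); (202, 0); (204, 0); (205, 0); (206, 0); (207, 0); (208, 3); (209, 3); (210, 2); (212, 0); (213, 0); (214, 0); (216, 0); (218, 2); (219, 0); (220, 3); (221, 3); (223, 2); (225, 0); (226, 0); (227, 0); (229, 0); (231, 2); (232, 3); (233, 0); (234, 3); (235, 0); (236, 0); (237, 0); (238, 0); (240, 0); (242, 2); (243, 3); (244, 0); (245, 0); (246, 3); (247, 0); (248, 0); (251, 0); (253, 2); (254, 3); (255, 0); (256, 0); (257, 3); (259, 3); (261, 1); (262, 3); (263, 2); (265, 0); (266, 0); (267, 3); (269, 3); (273, 0); (274, 0); (275, 0); (276, 3); (278, 3); (282, 0); (283, 0); (284, 3); (286, 3); (290, 0); (295, 0); (37, 0); (72, 3); (78, 2); (84, 3); (93, 3); (98, 3); (111, 3); (122, 0); (137, 0); (142, 1); (148, 2); (154, 0); (159, 1); (170, 0); (175, 1); (189, 1); (217, 3); (230, 3); (241, 3); (252, 3); (260, 0); (272, 1);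 (281, 1); (289, 1); (294, 1); (141, 0); (147, 3); (158, 0); (174, 0); (183, 2); (186, 2); (188, 0); (197, 2); (203, 3); (211, 2); (215, 3); (222, 2); (224, 2); (228, 3); (239, 3); (249, 3); (250, 3); (258, 1); (264, 2); (268, 1); (270, 0); (271, 0); (277, 1); (279, 0); (280, 0); (285, 3); (287, 0); (288, 0); (291, 2); (292, 2); (293, 0); (296, 2); (298, 1); (299, 3); (297, 0)].
Definition tab (l : seq nat) (k : 'I_5) : 'I_5 := nth ord0 (map o5 l) k.
Definition KSP := tab [:: 0; 2; 3; 1; 4].
Definition KSM := tab [:: 0; 3; 1; 2; 4].
Definition KAt := tab [:: 1; 0; 2; 4; 3].
Definition nKc (k : 'I_5) := if k == kT then 4 else 3.
Definition nKd (k : 'I_5) := if k == kT then 5 else 3.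
Lemma cert_cubeP : cert_ok ts_cubeP ta_cubeP km_cubeP ws_cubeP deds_cubeP KSP KAt nKc 120.
Proof. vm_compute. reflexivity. Qed.
Lemma cert_cubeM : cert_ok ts_cubeM ta_cubeM km_cubeM ws_cubeM deds_cubeM KSM KAt nKc 120.
Proof. vm_compute. reflexivity. Qed.
Lemma cert_dodP : cert_ok ts_dodP ta_dodP km_dodP ws_dodP deds_dodP KSP KAt nKd 300.
Proof. vm_compute. reflexivity. Qed.
Lemma cert_dodM : cert_ok ts_dodM ta_dodM km_dodM ws_dodM deds_dodM KSM KAt nKd 300.
Proof. vm_compute. reflexivity. Qed.

Definition ps_sig_it (B : finType) (sB aB : B -> B) (k : nat) (x : B * 'I_5) : B * 'I_5 :=
  let: (d, kk) := x in
  match nat_of_ord kk with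
  | 0 => (sB d, kA) | 1 => (d, kC) | 2 => (d, kS) | 3 => (d, kB)
  | _ => (iter k (face_next sB aB) d, kT) end.
Definition ps_inv_it (B : finType) (sBi sB aB : B -> B) (x : B * 'I_5) : B * 'I_5 :=
  let: (d, kk) := x in
  match nat_of_ord kk with
  | 0 => (sBi d, kA) | 1 => (d, kS) | 2 => (d, kB) | 3 => (d, kC)
  | _ => (face_next sB aB d, kT) end.

Section PsU.
Variables (B : finType) (sB aB sBi : B -> B).
Variables (X : Type) (sX aX sXi : X -> X) (Fb : B -> X).
Definition psU k (x : X * nat) : X * nat := let: (d, kk) := x in
  match kk with 0 => (sX d, 0) | 1 => (d, 2) | 2 => (d, 3) | 3 => (d, 1)
  | _ => (iter k (fun d => aX (sX d)) d, 4) end.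
Definition psUinv (x : X * nat) : X * nat := let: (d, kk) := x in
  match kk with 0 => (sXi d, 0) | 1 => (d, 3) | 2 => (d, 1) | 3 => (d, 2)
  | _ => (aX (sX d), 4) end.
Definition paU (x : X * nat) : X * nat := let: (d, kk) := x in
  match kk with 0 => (d, 1) | 1 => (d, 0) | 2 => (aX d, 2) | 3 => (d, 4) | _ => (d, 3) end.
Definition FU (x : B * 'I_5) : X * nat := (Fb x.1, nat_of_ord x.2).
Definition kU (x : X * nat) : 'I_5 := o5 x.2.
Hypothesis Fs : forall d, Fb (sB d) = sX (Fb d).
Hypothesis Fa : forall d, Fb (aB d) = aX (Fb d).
Hypothesis Fsi : forall d, Fb (sBi d) = sXi (Fb d).
Lemma FU_iter k d : Fb (iter k (face_next sB aB) d) = iter k (fun d => aX (sX d)) (Fb d).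
Proof. by elim: k => //= k IH; rewrite -IH /face_next Fa Fs. Qed.
Lemma FU_s k x : FU (ps_sig_it sB aB k x) = psU k (FU x).
Proof. by case: x => d [[|[|[|[|[|m]]]]] lt]; rewrite /FU /= ?Fs ?FU_iter. Qed.
Lemma FU_si x : FU (ps_inv_it sBi sB aB x) = psUinv (FU x).
Proof. by case: x => d [[|[|[|[|[|m]]]]] lt]; rewrite /FU /= ?Fsi /face_next ?Fa ?Fs. Qed.
Lemma FU_a x : FU (ps_alpha aB x) = paU (FU x).
Proof. by case: x => d [[|[|[|[|[|m]]]]] lt]; rewrite /FU /= ?Fa. Qed.
Lemma FU_k x : snd x = kU (FU x).
Proof. by case: x => d [[|[|[|[|[|m]]]]] lt]; rewrite /FU /kU /=; apply: val_inj. Qed.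
Lemma FU_inj : injective Fb -> injective FU.
Proof.
move=> Fi [d k] [d' k'] [] /Fi -> /val_inj ->; done.
Qed.
End PsU.

Definition CX := (bool * bool * bool * nat)%type.
Definition cbs (u : CX) : CX := let: (b0, b1, b2, i) := u in
  (b0, b1, b2, if b0 (+) b1 (+) b2 then (i + 2) %% 3 else i.+1 %% 3).
Definition cba (u : CX) : CX := let: (b0, b1, b2, i) := u in
  (if 0 == i then ~~ b0 else b0, if 1 == i then ~~ b1 else b1, if 2 == i then ~~ b2 else b2, i).
Definition o30 : 'I_3 := @Ordinal 3 0 isT.
Definition o31 : 'I_3 := @Ordinal 3 1 isT.
Definition o32 : 'I_3 := @Ordinal 3 2 isT.
Definition cFb (d : cube_dart) : CX := (d.1 o30, d.1 o31, d.1 o32, nat_of_ord d.2).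

Lemma cFb_s d : cFb (cube_sigma d) = cbs (cFb d).
Proof.
case: d => v [[|[|[|m]]] lt] //; rewrite /cube_sigma /cFb /cbs /parity3 /=;
  by case: (_ (+) _).
Qed.
Lemma cFb_a d : cFb (cube_alpha d) = cba (cFb d).
Proof. by case: d => v [[|[|[|m]]] lt] //; rewrite /cube_alpha /cFb /cba /= !ffunE. Qed.
Lemma cFb_inj : injective cFb.
Proof.
move=> [v i] [v' i'] [e0 e1 e2 e3]; congr pair; last exact: val_inj.
by apply/ffunP => -[[|[|[|m]]] lt] //; [move: e0|move: e1|move: e2]; congr (_ = _); apply: congr1; apply: val_inj.
Qed.
Lemma cube_s3 d : cube_sigma (cube_sigma (cube_sigma d)) = d.
Proof.
apply: cFb_inj; rewrite !cFb_s; case: d => v [[|[|[|m]]] lt] //; rewrite /cFb /=;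
  by case: (v o30); case: (v o31); case: (v o32).
Qed.
Lemma cube_f4 d : iter 4 (face_next cube_sigma cube_alpha) d = d.
Proof.
apply: cFb_inj; rewrite (FU_iter cFb_s cFb_a); case: d => v [[|[|[|m]]] lt] //; rewrite /cFb /=;
  by case: (v o30); case: (v o31); case: (v o32).
Qed.
Lemma cube_a2 d : cube_alpha (cube_alpha d) = d.
Proof.
apply: cFb_inj; rewrite !cFb_a; case: d => v [[|[|[|m]]] lt] //; rewrite /cFb /=;
  by case: (v o30); case: (v o31); case: (v o32).
Qed.
Definition cu0 : CX * nat := (false, false, false, 0, 4).
Lemma isoU_cubeP : iso_okU ts_cubeP ta_cubeP km_cubeP ws_cubeP 120 (psU cbs cba 3) (paU cba) (@kU CX) cu0.
Proof. vm_compute. reflexivity. Qed.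
Lemma isoU_cubeM : iso_okU ts_cubeM ta_cubeM km_cubeM ws_cubeM 120 (psUinv cbs cba (cbs \o cbs)) (paU cba) (@kU CX) cu0.
Proof. vm_compute. reflexivity. Qed.

Lemma card_cubeT : #|{: cube_dart * 'I_5}| = 120.
Proof. by rewrite !card_prod card_ffun !card_bool !card_ord. Qed.

Definition dsf := [:: 2; 0; 1; 3; 4].
Definition daf := [:: 3; 4; 2; 0; 1].
Definition dbs (l : seq nat) := map (fun j => nth 0 dsf j) l.
Definition dba (l : seq nat) := map (fun j => nth 0 daf j) l.
Definition o5l : seq 'I_5 := [:: kA; kB; kC; kS; kT].
Definition dFb (x : dodeca_dart) : seq nat := map (fun o => nat_of_ord (val x o)) o5l.

Lemma tpermE' (T : finType) (x y z : T) : tperm x y z = if z == x then y else if z == y then x else z.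
Proof.
case: tpermP => [->|->|nx ny]; rewrite ?eqxx //.
  by case: eqP => // ->.
by move/eqP/negbTE: nx => ->; move/eqP/negbTE: ny => ->.
Qed.
Lemma dod_s_val (o : 'I_5) : nat_of_ord (dod_s o) = nth 0 dsf o.
Proof. by rewrite /dod_s permM !tpermE'; case: o => [[|[|[|[|[|m]]]]] lt]. Qed.
Lemma dod_a_val (o : 'I_5) : nat_of_ord (dod_a o) = nth 0 daf o.
Proof. by rewrite /dod_a permM !tpermE'; case: o => [[|[|[|[|[|m]]]]] lt]. Qed.
Lemma dFb_s d : dFb (dodeca_sigma d) = dbs (dFb d).
Proof. by rewrite /dFb /dbs -map_comp; apply: eq_map => o /=; rewrite permM dod_s_val. Qed.
Lemma dFb_a d : dFb (dodeca_alpha d) = dba (dFb d).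
Proof. by rewrite /dFb /dba -map_comp; apply: eq_map => o /=; rewrite permM dod_a_val. Qed.
Lemma mem_o5l (o : 'I_5) : o \in o5l.
Proof. by case: o => [[|[|[|[|[|m]]]]] lt]. Qed.
Lemma dFb_inj : injective dFb.
Proof.
move=> x y /eq_in_map e; apply: val_inj; apply/permP => o; apply: val_inj.
exact: e (mem_o5l o).
Qed.
Lemma dFb_lt d : all (fun j => j < 5) (dFb d).
Proof. by rewrite /dFb /= !ltn_ord. Qed.
Lemma map_id5 (h : nat -> nat) l : (forall j, j < 5 -> h j = j) -> all (fun j => j < 5) l -> map h l = l.
Proof. by move=> H; elim: l => //= j l IH /andP [/H -> /IH ->]. Qed.
Lemma iter_map (h : nat -> nat) k l : iter k (map h) l = map (iter k h) l.
Proof. by elim: k => [|k IH] /=; rewrite ?map_id // IH -map_comp. Qed.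
Lemma dod_f5 d : iter 5 (face_next dodeca_sigma dodeca_alpha) d = d.
Proof.
apply: dFb_inj; rewrite (FU_iter dFb_s dFb_a).
have -> : forall k l, iter k (fun l => dba (dbs l)) l = map (iter k (fun j => nth 0 daf (nth 0 dsf j))) l.
  move=> k l; elim: k => [|k IH] /=; first by rewrite map_id.
  by rewrite IH /dba /dbs -!map_comp.
 move: (dFb_lt d); elim: (dFb d) => //= j l IH /andP [lj /IH ->].
by congr cons; case: j lj => [|[|[|[|[|]]]]].
Qed.
Lemma dod_s3 d : dodeca_sigma (dodeca_sigma (dodeca_sigma d)) = d.
Proof.
apply: dFb_inj; rewrite !dFb_s /dbs -!map_comp; apply: map_id5 (dFb_lt d); by case => [|[|[|[|[|]]]]].
Qed.
Lemma dod_a2 d : dodeca_alpha (dodeca_alpha d) = d.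
Proof.
apply: dFb_inj; rewrite !dFb_a /dba -!map_comp; apply: map_id5 (dFb_lt d); by case => [|[|[|[|[|]]]]].
Qed.
Lemma even1 : ~~ odd_perm (1 : {perm 'I_5}).
Proof. by rewrite odd_perm1. Qed.
Definition dod0 : dodeca_dart * 'I_5 := (exist _ 1%g even1, kT).
Lemma dFb0 : FU dFb dod0 = ([:: 0; 1; 2; 3; 4], 4).
Proof. by rewrite /FU /dFb /= !perm1. Qed.
Lemma isoU_dodP : iso_okU ts_dodP ta_dodP km_dodP ws_dodP 300 (psU dbs dba 4) (paU dba) (@kU (seq nat)) ([:: 0; 1; 2; 3; 4], 4).
Proof. vm_compute. reflexivity. Qed.
Lemma isoU_dodM : iso_okU ts_dodM ta_dodM km_dodM ws_dodM 300 (psUinv dbs dba (dbs \o dbs)) (paU dba) (@kU (seq nat)) ([:: 0; 1; 2; 3; 4], 4).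
Proof. vm_compute. reflexivity. Qed.
Lemma card_dodT : #|{: dodeca_dart * 'I_5}| = 300.
Proof.
rewrite card_prod card_ord card_sig.
have -> : #|[pred x : {perm 'I_5} | ~~ odd_perm x]| = #|@Alt 'I_5|.
  by apply: eq_card => x; rewrite inE Alt_even.
have := card_Alt (T := 'I_5); rewrite card_ord => /(_ isT).
move=> e; apply/eqP; rewrite -(eqn_pmul2l (isT : 0 < 2)) mulnA; move: e; rewrite /= => ->. done.
Qed.

Definition sh (o : bool) (l : nat) : nat := if o then l.+1 %% 5 else (l + 4) %% 5.
Definition pairOK (id ie l1 l2 : nat) : bool :=
  [|| (l1 == id) && (l2 == id), (l1 == ie) && (l2 == ie) |
      [&& l1 != l2, l1 != id, l1 != ie, l2 != id & l2 != ie]].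
Definition adj (id ie : nat) : bool := (id == sh true ie) || (id == sh false ie).
Definition rpos (ie : nat) (o : bool) (l : nat) : nat :=
  if o then (l + 5 - ie) %% 5 else (ie + 5 - l) %% 5.
Definition caseM (id ie : nat) (o : bool) : bool := rpos ie o id == 2.
Definition kindOf (id ie : nat) (o : bool) (l : nat) : 'I_5 :=
  o5 (nth 0 (if caseM id ie o then [:: 4; 3; 0; 1; 2] else [:: 4; 3; 2; 0; 1]) (rpos ie o l)).
Definition KSg (cm : bool) := if cm then KSP else KSM.
Definition bools := [:: true; false].
Definition P5 (f : nat -> bool) := all f (iota 0 5).

Definition BFcheck : bool :=
  P5 (fun id => P5 (fun ie => (id != ie) ==>
   [&& P5 (fun l => all (fun o =>
        [&& ~~ adj id ie ==> ((kindOf id ie o l == kA) == (l == id)) && ((kindOf id ie o l == kT) == (l == ie)),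
          sh (~~ o) (sh o l) == l, sh o l < 5, sh true l != sh false l,
          has (fun k => iter k (sh o) l == ie) (iota 0 5) &
          has (fun k => iter k (sh o) ie == l) (iota 0 5)]) bools),
      P5 (fun l => P5 (fun l' => all (fun o => (sh o l == sh o l') == (l == l')) bools)) &
      P5 (fun l1 => P5 (fun l2 => all (fun o1 => all (fun o2 =>
        [&& (pairOK id ie l1 l2 && pairOK id ie (sh (~~ o2) l2) (sh o1 l1) && ~~ adj id ie ==> (o1 == o2)),
            ([&& adj id ie, l1 == ie, l2 == ie & pairOK id ie (sh (~~ o2) l2) (sh o1 l1)] ==>
               (o2 == ~~ o1) && (o1 == (id == sh true ie))) &
            ([&& ~~ adj id ie, o1 == o2, pairOK id ie l1 l2 & pairOK id ie (sh (~~ o2) l2) (sh o1 l1)] ==>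
               (kindOf id ie o1 l2 == KSg (caseM id ie o1) (kindOf id ie o1 l1)) &&
               (kindOf id ie o1 (sh o1 l1) == KAt (kindOf id ie o1 l2)))]) bools) bools))])).

Lemma BFcheck_ok : BFcheck.
Proof. vm_compute. reflexivity. Qed.

Lemma inP5 (f : nat -> bool) x : P5 f -> x < 5 -> f x.
Proof. by move=> /allP H lt; apply: H; rewrite mem_iota. Qed.
Lemma inbools (f : bool -> bool) o : all f bools -> f o.
Proof. by case: o => /= /andP [] // _ /andP []. Qed.

Section BFfacts.
Variables (id ie : nat).
Hypotheses (Hid : id < 5) (Hie : ie < 5) (Hdie : id != ie).
Lemma BF_parts : [&& P5 (fun l => all (fun o =>
        [&& ~~ adj id ie ==> ((kindOf id ie o l == kA) == (l == id)) && ((kindOf id ie o l == kT) == (l == ie)),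
          sh (~~ o) (sh o l) == l, sh o l < 5, sh true l != sh false l,
          has (fun k => iter k (sh o) l == ie) (iota 0 5) &
          has (fun k => iter k (sh o) ie == l) (iota 0 5)]) bools),
      P5 (fun l => P5 (fun l' => all (fun o => (sh o l == sh o l') == (l == l')) bools)) &
      P5 (fun l1 => P5 (fun l2 => all (fun o1 => all (fun o2 =>
        [&& (pairOK id ie l1 l2 && pairOK id ie (sh (~~ o2) l2) (sh o1 l1) && ~~ adj id ie ==> (o1 == o2)),
            ([&& adj id ie, l1 == ie, l2 == ie & pairOK id ie (sh (~~ o2) l2) (sh o1 l1)] ==>
               (o2 == ~~ o1) && (o1 == (id == sh true ie))) &
            ([&& ~~ adj id ie, o1 == o2, pairOK id ie l1 l2 & pairOK id ie (sh (~~ o2) l2) (sh o1 l1)] ==>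
               (kindOf id ie o1 l2 == KSg (caseM id ie o1) (kindOf id ie o1 l1)) &&
               (kindOf id ie o1 (sh o1 l1) == KAt (kindOf id ie o1 l2)))]) bools) bools))].
Proof.
by have := inP5 (inP5 BFcheck_ok Hid) Hie; rewrite Hdie.
Qed.
Lemma BF_one l o : l < 5 -> [&& ~~ adj id ie ==> ((kindOf id ie o l == kA) == (l == id)) && ((kindOf id ie o l == kT) == (l == ie)),
          sh (~~ o) (sh o l) == l, sh o l < 5, sh true l != sh false l,
          has (fun k => iter k (sh o) l == ie) (iota 0 5) &
          has (fun k => iter k (sh o) ie == l) (iota 0 5)].
Proof. by case/and3P: BF_parts => H _ _ lt; have /= := inbools o (inP5 H lt). Qed.
Lemma BF_inj l l' o : l < 5 -> l' < 5 -> (sh o l == sh o l') = (l == l').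
Proof. by case/and3P: BF_parts => _ H _ lt lt'; have /= /eqP := inbools o (inP5 (inP5 H lt) lt'). Qed.
Lemma BF_two l1 l2 o1 o2 : l1 < 5 -> l2 < 5 ->
        [&& (pairOK id ie l1 l2 && pairOK id ie (sh (~~ o2) l2) (sh o1 l1) && ~~ adj id ie ==> (o1 == o2)),
            ([&& adj id ie, l1 == ie, l2 == ie & pairOK id ie (sh (~~ o2) l2) (sh o1 l1)] ==>
               (o2 == ~~ o1) && (o1 == (id == sh true ie))) &
            ([&& ~~ adj id ie, o1 == o2, pairOK id ie l1 l2 & pairOK id ie (sh (~~ o2) l2) (sh o1 l1)] ==>
               (kindOf id ie o1 l2 == KSg (caseM id ie o1) (kindOf id ie o1 l1)) &&
               (kindOf id ie o1 (sh o1 l1) == KAt (kindOf id ie o1 l2)))].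
Proof. by case/and3P: BF_parts => _ _ H l1l l2l; have /= := inbools o2 (inbools o1 (inP5 (inP5 H l1l) l2l)). Qed.
End BFfacts.

Lemma size_len (T : Type) (l : seq T) : size l = length l.
Proof. by elim: l => //= ? ? ->. Qed.

Section DS.
Variables (D : finType) (sigma alpha : D -> D) (angle : D -> R) (a b c d e : R) (p : seq R) (ne : nat).
Hypothesis Hnd : List.NoDup [:: a; b; c; d; e].
Hypothesis Hp : Permutation p [:: a; b; c; d; e].
Hypothesis Hac : angle_congruent sigma alpha angle p.
Hypothesis Hvt : forall x, Permutation (vertex_angles sigma angle x) [:: a; b; c]
   \/ vertex_angles sigma angle x = [:: d; d; d] \/ vertex_angles sigma angle x = nseq ne e.
Hypothesis Hne : 2 <= ne.

Local Notation f := (face_next sigma alpha).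

Lemma sinj : injective sigma. Proof. by case: Hac => [[[]]]. Qed.
Lemma aK x : alpha (alpha x) = x. Proof. by case: Hac => [[[]]]. Qed.
Lemma ainj : injective alpha. Proof. exact: can_inj aK. Qed.
Lemma finj : injective f. Proof. by move=> x y /ainj /sinj. Qed.
Lemma Hconn x y : connect (fun a b => (b == sigma a) || (b == alpha a)) x y.
Proof. by case: Hac => [[[]]]. Qed.
Lemma Heul : (nb_vertices sigma + nb_faces sigma alpha).*2 = #|D| + 4.
Proof. by case: Hac => [[[]]]. Qed.
Lemma Hf5 x : fingraph.order f x = 5. Proof. by case: Hac => [[]]. Qed.
Lemma Htile x : exists k, tile_angles sigma alpha angle x = rot k p \/ tile_angles sigma alpha angle x = rot k (rev p).
Proof. by case: Hac. Qed.
Lemma f5 x : iter 5 f x = x.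
Proof. by rewrite -{1}(Hf5 x) iter_order //; exact: finj. Qed.

Lemma p_shape : exists p0 p1 p2 p3 p4, p = [:: p0; p1; p2; p3; p4].
Proof.
have := Permutation_length Hp; case: p => [|p0 [|p1 [|p2 [|p3 [|p4 [|? ?]]]]]] //= _.
by exists p0, p1, p2, p3, p4.
Qed.
Lemma p_nodup : List.NoDup p.
Proof. exact: Permutation_NoDup (Permutation_sym Hp) Hnd. Qed.

Lemma nodup5 (u0 u1 u2 u3 u4 : R) : List.NoDup [:: u0; u1; u2; u3; u4] ->
  [/\ [/\ u0 <> u1, u0 <> u2, u0 <> u3 & u0 <> u4], [/\ u1 <> u2, u1 <> u3 & u1 <> u4],
      [/\ u2 <> u3 & u2 <> u4] & u3 <> u4].
Proof.
move=> H; inversion H as [|? ? H0 H1]; subst.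
inversion H1 as [|? ? H2 H3]; subst.
inversion H3 as [|? ? H4 H5]; subst.
inversion H5 as [|? ? H6 H7]; subst.
move: H0 H2 H4 H6 => /= H0 H2 H4 H6.
by split; [split|split|split|]; move=> E; subst; tauto.
Qed.

Definition q (i : nat) : R := nth R0 p i.
Lemma q_inj i j : i < 5 -> j < 5 -> q i = q j -> i = j.
Proof.
have [p0 [p1 [p2 [p3 [p4 ep]]]]] := p_shape.
rewrite /q ep; have := p_nodup; rewrite ep => /nodup5 [[h01 h02 h03 h04] [h12 h13 h14] [h23 h24] h34].
move=> li lj; case: i li => [|[|[|[|[|i]]]]] // _; case: j lj => [|[|[|[|[|j]]]]] // _ /= E; congruence.
Qed.

Definition Rb (u v : R) : bool := if Req_EM_T u v then true else false.
Lemma RbP u v : reflect (u = v) (Rb u v).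
Proof. by rewrite /Rb; case: Req_EM_T => H; constructor. Qed.
Definition lab (v : R) : nat := find (Rb v) p.
Lemma lab_spec v : List.In v p -> lab v < 5 /\ q (lab v) = v.
Proof.
move=> H.
have hp : has (Rb v) p.
  elim: p H => //= u s IH [-> | /IH ->]; last by rewrite orbT.
  by apply/orP; left; apply/RbP.
have [p0 [p1 [p2 [p3 [p4 ep]]]]] := p_shape.
split; first by move: hp; rewrite /lab has_find ep.
by apply/esym/RbP; apply: nth_find.
Qed.
Lemma inp v : List.In v [:: a; b; c; d; e] -> List.In v p.
Proof. by apply: Permutation_in; apply: Permutation_sym. Qed.

Lemma neq_all : [/\ [/\ a <> b, a <> c, a <> d & a <> e], [/\ b <> c, b <> d & b <> e],
      [/\ c <> d & c <> e] & d <> e].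
Proof. exact: nodup5 Hnd. Qed.
Lemma abc_nodup : List.NoDup [:: a; b; c].
Proof.
have [[hab hac _ _] [hbc _ _] _ _] := neq_all.
constructor; first by move=> /= [|[|]] //; apply/nesym.
constructor; first by move=> /= [|] //; apply/nesym.
by constructor => //; constructor.
Qed.

Definition L x := lab (angle x).
Definition idl := lab d.
Definition ie := lab e.

Lemma vert x : [\/ [/\ fingraph.order sigma x = 3, List.In (angle x) [:: a; b; c],
     List.In (angle (sigma x)) [:: a; b; c] & angle x <> angle (sigma x)],
  [/\ fingraph.order sigma x = 3, angle x = d & angle (sigma x) = d] |
  [/\ fingraph.order sigma x = ne, angle x = e & angle (sigma x) = e]].
Proof.
have := Hvt x; rewrite /vertex_angles (_ : fingraph.orbit sigma x = traject sigma x (fingraph.order sigma x)) //.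
case=> [H | [H | H]].
- have k3 : fingraph.order sigma x = 3.
    by move: (Permutation_length H); rewrite -size_len size_map size_traject.
  constructor 1; rewrite k3 in H; move: H => /= H; split => //.
  + by apply: (Permutation_in _ H) => /=; left.
  + by apply: (Permutation_in _ H) => /=; right; left.
  + move=> E; have := Permutation_NoDup (Permutation_sym H) abc_nodup.
    rewrite E => H1; inversion H1 as [|? ? H2 _]; apply: H2; by left.
- have k3 : fingraph.order sigma x = 3 by move: (congr1 size H); rewrite size_map size_traject.
  constructor 2; rewrite k3 in H; move: H => /= -[-> -> _]; by split.
- have kn : fingraph.order sigma x = ne by move: (congr1 size H); rewrite size_map size_traject size_nseq.
  have [n' en] : exists n', ne = n'.+2 by exists ne.-2; lia.
  constructor 3; rewrite kn en in H; move: H => /= -[-> -> _]; by split.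
Qed.

Lemma angle_in x : List.In (angle x) [:: a; b; c; d; e].
Proof.
case: (vert x) => [[_ H _ _]|[_ -> _]|[_ -> _]]; rewrite /=; try tauto.
by move: H => /= [|[|[|]]]; tauto.
Qed.

Lemma L_spec x : L x < 5 /\ q (L x) = angle x.
Proof. exact: lab_spec (inp (angle_in x)). Qed.
Lemma L_lt x : L x < 5. Proof. by case: (L_spec x). Qed.
Lemma qL x : q (L x) = angle x. Proof. by case: (L_spec x). Qed.
Lemma L_of x i : i < 5 -> angle x = q i -> L x = i.
Proof. by move=> li E; apply: q_inj => //; [exact: L_lt | rewrite qL]. Qed.
Lemma id_spec : idl < 5 /\ q idl = d.
Proof. by apply: lab_spec; apply: inp => /=; tauto. Qed.
Lemma ie_spec : ie < 5 /\ q ie = e.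
Proof. by apply: lab_spec; apply: inp => /=; tauto. Qed.
Lemma id_lt : idl < 5. Proof. by case: id_spec. Qed.
Lemma ie_lt : ie < 5. Proof. by case: ie_spec. Qed.
Lemma die : idl != ie.
Proof.
apply/eqP => E; have [_ hd] := id_spec; have [_ he] := ie_spec.
have [_ _ _ hde] := neq_all; apply: hde; by rewrite -hd -he E.
Qed.
Lemma L_d x : L x = idl <-> angle x = d.
Proof.
have [_ hd] := id_spec; split => [E | E]; first by rewrite -qL E.
by apply: L_of; [exact: id_lt | rewrite E hd].
Qed.
Lemma L_e x : L x = ie <-> angle x = e.
Proof.
have [_ he] := ie_spec; split => [E | E]; first by rewrite -qL E.
by apply: L_of; [exact: ie_lt | rewrite E he].
Qed.

Lemma abc_not_de v : List.In v [:: a; b; c] -> v <> d /\ v <> e.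
Proof.
have [[_ _ hAd hAe] [_ hBd hBe] [hCd hCe] _] := neq_all.
by move=> /= [<-|[<-|[<-|[]]]].
Qed.

Lemma pair_ok x : pairOK idl ie (L x) (L (sigma x)).
Proof.
rewrite /pairOK; case: (vert x) => [[_ H1 H2 H3]|[_ H1 H2]|[_ H1 H2]].
- have [n1 n1'] := abc_not_de H1; have [n2 n2'] := abc_not_de H2.
  apply/orP; right; apply/orP; right; apply/and5P; split; apply/eqP.
  + move=> E; apply: H3; rewrite -qL E; exact: qL.
  + by move/L_d.
  + by move/L_e.
  + by move/L_d.
  + by move/L_e.
- have -> : L x = idl by apply/L_d. have -> : L (sigma x) = idl by apply/L_d. by rewrite !eqxx.
- have -> : L x = ie by apply/L_e. have -> : L (sigma x) = ie by apply/L_e. by rewrite !eqxx orbT.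
Qed.

Lemma order_L x : fingraph.order sigma x = (if L x == ie then ne else 3).
Proof.
case: (vert x) => [[H0 H1 _ _]|[H0 H1 _]|[H0 H1 _]]; rewrite H0.
- have [_ n1] := abc_not_de H1; case: eqP => // /L_e //.
- have -> : L x = idl by apply/L_d.
  by rewrite (negbTE die).
- have -> : L x = ie by apply/L_e.
  by rewrite eqxx.
Qed.

Lemma Lq_gen y i : i < 5 -> angle y = q i -> L y = i.
Proof. exact: L_of. Qed.

Lemma tile_rel x : exists o, L (f x) = sh o (L x) /\ L (f (f x)) = sh o (L (f x)).
Proof.
have [p0 [p1 [p2 [p3 [p4 ep]]]]] := p_shape.
have Lq0 y : angle y = p0 -> L y = 0 by move=> E; apply: L_of => //; rewrite E /q ep.
have Lq1 y : angle y = p1 -> L y = 1 by move=> E; apply: L_of => //; rewrite E /q ep.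
have Lq2 y : angle y = p2 -> L y = 2 by move=> E; apply: L_of => //; rewrite E /q ep.
have Lq3 y : angle y = p3 -> L y = 3 by move=> E; apply: L_of => //; rewrite E /q ep.
have Lq4 y : angle y = p4 -> L y = 4 by move=> E; apply: L_of => //; rewrite E /q ep.
have [k Hk] := Htile x.
move: Hk; rewrite /tile_angles ep.
case: k => [|[|[|[|[|k]]]]] /= [] [E0 E1 E2 E3 E4];
  (first [rewrite (Lq0 _ E0) | rewrite (Lq1 _ E0) | rewrite (Lq2 _ E0) | rewrite (Lq3 _ E0) | rewrite (Lq4 _ E0)]);
  (first [rewrite (Lq0 _ E1) | rewrite (Lq1 _ E1) | rewrite (Lq2 _ E1) | rewrite (Lq3 _ E1) | rewrite (Lq4 _ E1)]);
  (first [rewrite (Lq0 _ E2) | rewrite (Lq1 _ E2) | rewrite (Lq2 _ E2) | rewrite (Lq3 _ E2) | rewrite (Lq4 _ E2)]);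
  by [exists true | exists false].
Qed.

Lemma bf1 l o : l < 5 -> [&& ~~ adj idl ie ==> ((kindOf idl ie o l == kA) == (l == idl)) && ((kindOf idl ie o l == kT) == (l == ie)),
          sh (~~ o) (sh o l) == l, sh o l < 5, sh true l != sh false l,
          has (fun k => iter k (sh o) l == ie) (iota 0 5) &
          has (fun k => iter k (sh o) ie == l) (iota 0 5)].
Proof. exact: (BF_one id_lt ie_lt die o). Qed.
Lemma sh_inv o l : l < 5 -> sh (~~ o) (sh o l) = l.
Proof. by move/(bf1 o) => /andP [_ /and5P [/eqP -> _ _ _ _]]. Qed.
Lemma sh_lt o l : l < 5 -> sh o l < 5.
Proof. by move/(bf1 o) => /andP [_ /and5P [_ -> _ _ _]]. Qed.
Lemma sh_tf l : l < 5 -> sh true l != sh false l.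
Proof. by move/(bf1 true) => /andP [_ /and5P [_ _ -> _ _]]. Qed.
Lemma cover1 o l : l < 5 -> exists2 k, k < 5 & iter k (sh o) l = ie.
Proof. move/(bf1 o) => /andP [_ /and5P [_ _ _ H _]]; case/hasP: H => k; rewrite mem_iota => lk /eqP; by exists k. Qed.
Lemma cover2 o l : l < 5 -> exists2 k, k < 5 & iter k (sh o) ie = l.
Proof. move/(bf1 o) => /andP [_ /and5P [_ _ _ _ H]]; case/hasP: H => k; rewrite mem_iota => lk /eqP; by exists k. Qed.
Lemma kindAT o l : l < 5 -> ~~ adj idl ie ->
  (kindOf idl ie o l == kA) = (l == idl) /\ (kindOf idl ie o l == kT) = (l == ie).
Proof. by move/(bf1 o) => /andP [H _] /(implyP H) /andP [/eqP -> /eqP ->]. Qed.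

Definition oy x := L (f x) == sh true (L x).
Lemma oy_eq x o : L (f x) = sh o (L x) -> oy x = o.
Proof.
rewrite /oy => ->; case: o; first by rewrite eqxx.
by rewrite eq_sym; apply/negbTE/sh_tf/L_lt.
Qed.
Lemma Lf x : L (f x) = sh (oy x) (L x).
Proof. by have [o [E _]] := tile_rel x; rewrite (oy_eq E). Qed.
Lemma oyf x : oy (f x) = oy x.
Proof. by have [o [E1 E2]] := tile_rel x; rewrite (oy_eq E1) (oy_eq E2). Qed.
Lemma Liter k y : L (iter k f y) = iter k (sh (oy y)) (L y) /\ oy (iter k f y) = oy y.
Proof. by elim: k => // k [IH1 IH2] /=; rewrite Lf oyf IH1 IH2. Qed.

Definition w x := finv sigma (f x).
Lemma sw x : sigma (w x) = f x. Proof. exact: (f_finv sinj). Qed.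
Lemma fw x : f (w x) = sigma x. Proof. by rewrite /face_next sw /face_next aK. Qed.
Lemma edge x : pairOK idl ie (L x) (L (sigma x)) /\
   pairOK idl ie (sh (~~ oy (w x)) (L (sigma x))) (sh (oy x) (L x)).
Proof.
split; first exact: pair_ok.
have := pair_ok (w x); rewrite sw Lf.
by rewrite -[in L (sigma x)]fw Lf sh_inv // L_lt.
Qed.

Lemma eps_s x : L x = ie -> L (sigma x) = ie.
Proof.
move=> /L_e ex; case: (vert x) => [[_ H _ _]|[_ H _]|[_ _ H]].
- by have [_ ] := abc_not_de H; rewrite ex.
- have [_ _ _ hde] := neq_all; by exfalso; apply: hde; rewrite -H ex.
- exact/L_e.
Qed.
Lemma eps_s' x : L (sigma x) = ie -> L x = ie.
Proof.
move=> E; have := pair_ok x; rewrite E /pairOK [ie == idl]eq_sym (negbTE die) eqxx andbF /= andbT.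
by rewrite !andbF orbF => /eqP.
Qed.

Lemma D_nonempty : 0 < #|D|.
Proof.
rewrite lt0n; apply/negP => /eqP D0.
have := Heul; rewrite D0.
have h1 : nb_vertices sigma = 0.
  by apply/eqP; rewrite -leqn0 -D0 /nb_vertices /n_comp_mem; apply: max_card.
have h2 : nb_faces sigma alpha = 0.
  by apply/eqP; rewrite -leqn0 -D0 /nb_faces /n_comp_mem; apply: max_card.
by rewrite h1 h2.
Qed.

Lemma eps_ex : exists x, L x = ie.
Proof.
have /card_gt0P [y _] := D_nonempty.
have [k _ Hk] := cover1 (oy y) (L_lt y).
exists (iter k f y); have [-> _] := Liter k y; exact: Hk.
Qed.

Lemma nadj : ~~ adj idl ie.
Proof.
apply/negP => Hadj.
have [x Lx] := eps_ex.
have key y : L y = ie -> oy (w y) = ~~ oy y /\ oy y = (idl == sh true ie).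
  move=> Ly; have Lsy := eps_s Ly; have [_ E2] := edge y.
  have := BF_two id_lt ie_lt die (oy y) (oy (w y)) (L_lt y) (L_lt (sigma y)).
  case/and3P => _ /implyP H _.
  have Hpre : [&& adj idl ie, L y == ie, L (sigma y) == ie &
     pairOK idl ie (sh (~~ oy (w y)) (L (sigma y))) (sh (oy y) (L y))] by rewrite E2 Hadj Ly Lsy eqxx.
  by have /andP [/eqP -> /eqP ->] := H Hpre.
have [k1 k2] := key x Lx; have [k3 k4] := key (sigma x) (eps_s Lx).
move: k4; rewrite -fw oyf k1 k2; by case: (_ == _).
Qed.

Lemma oy_w x : oy (w x) = oy x.
Proof.
have [E1 E2] := edge x.
have := BF_two id_lt ie_lt die (oy x) (oy (w x)) (L_lt x) (L_lt (sigma x)).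
by case/and3P => /implyP H _ _; move: H; rewrite E1 E2 nadj => /(_ isT) /eqP.
Qed.
Lemma oy_s x : oy (sigma x) = oy x.
Proof. by rewrite -fw oyf oy_w. Qed.
Lemma fsi x : f (finv sigma x) = alpha x.
Proof. by rewrite /face_next (f_finv sinj). Qed.
Lemma oy_a x : oy (alpha x) = oy x.
Proof. by rewrite -fsi oyf -{2}(f_finv sinj x) oy_s. Qed.
Lemma oy_const x y : oy x = oy y.
Proof.
have /connectP [pth Hp' ->] := Hconn x y.
elim: pth x Hp' => //= z pth IH x /andP [/orP [] /eqP -> H]; rewrite -IH //.
- by rewrite oy_s.
- by rewrite oy_a.
Qed.

Definition o := if [pick x : D | true] is Some x then oy x else true.
Lemma oyo x : oy x = o.
Proof. by rewrite /o; case: pickP => [y _|/(_ x) //]; exact: oy_const. Qed.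
Definition cm := caseM idl ie o.
Definition kD x := kindOf idl ie o (L x).

Lemma edge' x : pairOK idl ie (L x) (L (sigma x)) /\ pairOK idl ie (sh (~~ o) (L (sigma x))) (sh o (L x)).
Proof. by have := edge x; rewrite !oyo. Qed.

Lemma kinds3 x : (kD (sigma x) == KSg cm (kD x)) && (kindOf idl ie o (sh o (L x)) == KAt (kD (sigma x))).
Proof.
have [E1 E2] := edge' x.
have := BF_two id_lt ie_lt die o o (L_lt x) (L_lt (sigma x)).
by case/and3P => _ _ /implyP H; apply: H; rewrite nadj eqxx E1 E2.
Qed.
Lemma hKS x : kD (sigma x) = KSg cm (kD x).
Proof. by case/andP: (kinds3 x) => /eqP. Qed.
Lemma hKA x : kD (alpha x) = KAt (kD x).
Proof.
case/andP: (kinds3 (finv sigma x)) => _ /eqP; rewrite (f_finv sinj) => <-.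
by rewrite /kD -fsi Lf oyo.
Qed.
Lemma kD_A x : kD x = kA <-> angle x = d.
Proof.
have [H _] := kindAT o (L_lt x) nadj; rewrite -L_d; split => [E|E].
  by apply/eqP; rewrite -H -/(kD x) E.
by apply/eqP; rewrite /kD H E.
Qed.
Lemma kD_T x : kD x = kT <-> angle x = e.
Proof.
have [_ H] := kindAT o (L_lt x) nadj; rewrite -L_e; split => [E|E].
  by apply/eqP; rewrite -H -/(kD x) E.
by apply/eqP; rewrite /kD H E.
Qed.

Lemma evalD_nseq k y : evalD sigma alpha (nseq k true) y = iter k sigma y.
Proof. by elim: k y => // k IH y; rewrite iterSr -IH. Qed.

Lemma hrel (nK : 'I_5 -> nat) : (forall k, nK k = if k == kT then ne else 3) ->
  forall y r, evalD sigma alpha (relW nK r (kD y)) y = y.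
Proof.
move=> HnK y [|[|[|r]]].
- by rewrite /evalD /= aK.
- by have := f5 y; rewrite /evalD /= /face_next.
- apply: ainj; have := f5 (alpha y); rewrite /evalD /= /face_next => {2}<-; by [].
- rewrite /relW evalD_nseq HnK -{3}(iter_order sinj y) order_L.
  have [_ H] := kindAT o (L_lt y) nadj.
  by rewrite /kD H.
Qed.

Lemma cnt_step l : l < 5 -> #|[pred x | L x == l]| = #|[pred x | L x == sh o l]|.
Proof.
move=> lt.
have -> : #|[pred x | L x == l]| = #|[preim f of [pred y | L y == sh o l]]|.
  apply: eq_card => x; rewrite !inE /= Lf oyo.
  by rewrite (BF_inj id_lt ie_lt die o (L_lt x) lt).
rewrite card_preim; last exact: finj.
by apply: eq_card => y; rewrite !inE (injF_onto finj y).
Qed.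
Lemma cnt_eq l : l < 5 -> #|[pred x | L x == l]| = #|[pred x | L x == ie]|.
Proof.
move=> lt; have [k _ <-] := cover2 o lt.
elim: k => // k IH /=; rewrite -cnt_step // .
elim: k {IH} => [|k IHk] /=; [exact: ie_lt | exact: sh_lt].
Qed.
Lemma cardD5 : #|D| = 5 * #|[pred x | L x == ie]|.
Proof.
rewrite -sum1_card (partition_big (fun x => Ordinal (L_lt x)) xpredT) //=.
rewrite (eq_bigr (fun _ => #|[pred x | L x == ie]|)); last first.
  move=> j _; rewrite -(cnt_eq (ltn_ord j)) -sum1_card.
  by apply: eq_bigl => x; rewrite !inE.
by rewrite sum_nat_const card_ord mulnC.
Qed.

Lemma euler_count : exists VE VC, [/\ VE * ne = #|[pred x | L x == ie]|,
   VC * 3 = 4 * #|[pred x | L x == ie]| &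
   2 * (VE + VC + #|[pred x | L x == ie]|) = 5 * #|[pred x | L x == ie]| + 4].
Proof.
set m := #|[pred x | L x == ie]|.
pose S := [set x | L x == ie].
have hSm : #|S| = m by apply: eq_card => x; rewrite !inE.
have hF : nb_faces sigma alpha * 5 = #|D|.
  rewrite /nb_faces; apply: (fcard_order_set finj).
    by apply/subsetP => x _; rewrite inE Hf5.
  by move=> x y _.
have clS : fclosed sigma S.
  move=> x y /eqP <-; rewrite !inE; apply/eqP/eqP; [exact: eps_s | exact: eps_s'].
have hVE : fcard sigma S * ne = #|S|.
  apply: (fcard_order_set sinj) => //; apply/subsetP => x; rewrite !inE order_L => /eqP ->.
  by rewrite eqxx.
have hVC : fcard sigma [predC S] * 3 = #|[predC S]|.
  apply: (fcard_order_set sinj); last exact: predC_closed.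
  apply/subsetP => x; rewrite !inE order_L => /negbTE ->; by [].
have hC := cardC S.
have hD := cardD5; rewrite -/m in hD.
exists (fcard sigma S), (fcard sigma [predC S]); split.
- by rewrite hVE.
- lia.
- have := Heul; rewrite /nb_vertices (n_compC S).
  lia.
Qed.

Lemma card_D4 : ne = 4 -> #|D| = 120.
Proof. move=> en; have [VE [VC [h1 h2 h3]]] := euler_count; rewrite cardD5; move: h1 h2 h3; rewrite en; lia. Qed.
Lemma card_D5 : ne = 5 -> #|D| = 300.
Proof. move=> en; have [VE [VC [h1 h2 h3]]] := euler_count; rewrite cardD5; move: h1 h2 h3; rewrite en; lia. Qed.

Lemma de_nadj : de_not_adjacent sigma alpha angle d e.
Proof.
move=> x; split => -[Ex' Efx'].
- have Ex := proj2 (L_d x) Ex'; have Efx := proj2 (L_e _) Efx'.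
  have := nadj; rewrite /adj; move: Efx; rewrite Lf oyo Ex.
  move=> E; have := sh_inv o id_lt; rewrite E; case: o => <-; by rewrite eqxx ?orbT.
- have Ex := proj2 (L_e x) Ex'; have Efx := proj2 (L_d _) Efx'.
  have := nadj; rewrite /adj; move: Efx; rewrite Lf oyo Ex.
  by move=> <-; case: o; rewrite eqxx ?orbT.
Qed.
Lemma dummy_de : True.
Proof.
by [].
Qed.

Lemma kD_abc x : (angle x = a \/ angle x = b \/ angle x = c) <-> (kD x = kB \/ kD x = kC \/ kD x = kS).
Proof.
have [[_ _ had hae] [_ hbd hbe] [hcd hce] _] := neq_all.
split.
- move=> H; have nA : kD x <> kA by move/kD_A => E; case: H => [|[|]] H; rewrite H in E.
  have nT : kD x <> kT by move/kD_T => E; case: H => [|[|]] H; rewrite H in E.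
  move: nA nT; case: (kD x) => [[|[|[|[|[|m]]]]] lt] // nA nT.
  + by exfalso; apply: nA; apply: val_inj.
  + by left; apply: val_inj.
  + by right; left; apply: val_inj.
  + by right; right; apply: val_inj.
  + by exfalso; apply: nT; apply: val_inj.
- move=> H; have nd : angle x <> d by move/kD_A; case: H => [|[|]] ->.
  have ne' : angle x <> e by move/kD_T; case: H => [|[|]] ->.
  have := angle_in x; move=> /= [|[|[|[|[|[]]]]]] E; rewrite -E in nd ne' *;
    by [left | right; left | right; right | exfalso; apply: nd | exfalso; apply: ne'].
Qed.

Lemma DS_conclusion (n : nat) (T : finType) (aT : T -> T) (kTf : T -> 'I_5) (tT0 : T)
  (tsP taP : seq nat) (kmP : seq 'I_5) (wsP : seq (seq bool)) (dedsP : seq (nat * nat)) (sTP : T -> T)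
  (tsM taM : seq nat) (kmM : seq 'I_5) (wsM : seq (seq bool)) (dedsM : seq (nat * nat)) (sTM : T -> T) (nK : 'I_5 -> nat) :
  (forall k, nK k = if k == kT then ne else 3) ->
  cert_ok tsP taP kmP wsP dedsP KSP KAt nK n -> kmt kmP 0 = kT -> iso_ok tsP taP kmP wsP n sTP aT kTf tT0 ->
  cert_ok tsM taM kmM wsM dedsM KSM KAt nK n -> kmt kmM 0 = kT -> iso_ok tsM taM kmM wsM n sTM aT kTf tT0 ->
  #|D| = n -> #|T| = n ->
  exists phi : D -> T, [/\ bijective phi, (forall x, phi (alpha x) = aT (phi x)),
     (forall x, phi (sigma x) = sTP (phi x)) \/ (forall x, phi (sigma x) = sTM (phi x)) &
     forall x, [/\ angle x = d <-> kTf (phi x) = kA, angle x = e <-> kTf (phi x) = kT &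
       (angle x = a \/ angle x = b \/ angle x = c) <-> (kTf (phi x) = kB \/ kTf (phi x) = kC \/ kTf (phi x) = kS)]].
Proof.
move=> HnK cP k0P iP cM k0M iM cD cT.
have [x0 Lx0] := eps_ex.
have kx0 : kD x0 = kT by apply/kD_T/L_e.
have fin phi : (forall x, kTf (phi x) = kD x) -> forall x, [/\ angle x = d <-> kTf (phi x) = kA, angle x = e <-> kTf (phi x) = kT &
       (angle x = a \/ angle x = b \/ angle x = c) <-> (kTf (phi x) = kB \/ kTf (phi x) = kC \/ kTf (phi x) = kS)].
  by move=> H x; rewrite H; split; [apply: iff_sym; apply: kD_A | apply: iff_sym; apply: kD_T | apply: kD_abc].
case Ecm : cm.
- have hKS' x : kD (sigma x) = KSP (kD x) by rewrite hKS Ecm.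
  have [phi [bij Hs Ha Hk]] := assemble cP hKS' hKA (hrel HnK) (etrans kx0 (esym k0P)) Hconn cD iP cT.
  by exists phi; split => //; [left | apply: fin].
- have hKS' x : kD (sigma x) = KSM (kD x) by rewrite hKS Ecm.
  have [phi [bij Hs Ha Hk]] := assemble cM hKS' hKA (hrel HnK) (etrans kx0 (esym k0M)) Hconn cD iM cT.
  by exists phi; split => //; [right | apply: fin].
Qed.
End DS.

Lemma ps_sig_it_eq (B : finType) (sB aB : B -> B) k :
  injective (face_next sB aB) -> (forall d, iter k.+1 (face_next sB aB) d = d) ->
  forall x, ps_sigma sB aB x = ps_sig_it sB aB k x.
Proof.
move=> fi fk [d [[|[|[|[|[|m]]]]] lt]] //=; congr pair.
apply fi; rewrite (f_finv fi); exact: (esym (fk d)).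
Qed.

Lemma ps_sigma_inv (B : finType) (sB aB : B -> B) :
  injective (face_next sB aB) -> (forall d, sB (sB (sB d)) = d) ->
  forall x, ps_sigma sB aB (ps_inv_it (sB \o sB) sB aB x) = x.
Proof.
move=> fi s3 [d [[|[|[|[|[|m]]]]] lt]] /=; try (congr pair; apply: val_inj; by []).
- by rewrite s3; congr pair; apply: val_inj.
all: try by rewrite (finv_f fi); congr pair; apply: val_inj.
Qed.

Lemma cube_finj : injective (face_next cube_sigma cube_alpha).
Proof.
move=> x y; rewrite /face_next => /(can_inj cube_a2) H.
by rewrite -[x]cube_s3 -[y]cube_s3 H.
Qed.
Lemma dod_finj : injective (face_next dodeca_sigma dodeca_alpha).
Proof.
move=> x y; rewrite /face_next => /(can_inj dod_a2) H.
by rewrite -[x]dod_s3 -[y]dod_s3 H.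
Qed.

Definition cube0 : cube_dart * 'I_5 := ([ffun=> false], o30, kT).
Lemma iso_cubeP : iso_ok ts_cubeP ta_cubeP km_cubeP ws_cubeP 120
   (ps_sig_it cube_sigma cube_alpha 3) (ps_alpha cube_alpha) snd cube0.
Proof.
apply: (iso_okU_ok (F := FU cFb)) isoU_cubeP.
- exact: FU_inj cFb_inj.
- exact: (FU_s cFb_s cFb_a 3).
- exact: FU_a cFb_a.
- exact: FU_k.
- by rewrite /FU /cFb /= !ffunE.
Qed.

Lemma iso_cubeM : iso_ok ts_cubeM ta_cubeM km_cubeM ws_cubeM 120
   (ps_inv_it (cube_sigma \o cube_sigma) cube_sigma cube_alpha) (ps_alpha cube_alpha) snd cube0.
Proof.
apply: (iso_okU_ok (F := FU cFb)) isoU_cubeM.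
- exact: FU_inj cFb_inj.
- apply: (FU_si cFb_s cFb_a) => d /=; by rewrite !cFb_s.
- exact: FU_a cFb_a.
- exact: FU_k.
- by rewrite /FU /cFb /= !ffunE.
Qed.
Lemma iso_dodP : iso_ok ts_dodP ta_dodP km_dodP ws_dodP 300
   (ps_sig_it dodeca_sigma dodeca_alpha 4) (ps_alpha dodeca_alpha) snd dod0.
Proof.
apply: (iso_okU_ok (F := FU dFb)) isoU_dodP.
- exact: FU_inj dFb_inj.
- exact: (FU_s dFb_s dFb_a 4).
- exact: FU_a dFb_a.
- exact: FU_k.
- exact: dFb0.
Qed.
Lemma iso_dodM : iso_ok ts_dodM ta_dodM km_dodM ws_dodM 300
   (ps_inv_it (dodeca_sigma \o dodeca_sigma) dodeca_sigma dodeca_alpha) (ps_alpha dodeca_alpha) snd dod0.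
Proof.
apply: (iso_okU_ok (F := FU dFb)) isoU_dodM.
- exact: FU_inj dFb_inj.
- apply: (FU_si dFb_s dFb_a) => d /=; by rewrite !dFb_s.
- exact: FU_a dFb_a.
- exact: FU_k.
- exact: dFb0.
Qed.

Theorem mainTheorem7 :
  (* vertex types  alpha beta gamma,  delta^3,  epsilon^4  :  the cube *)
  (forall (D : finType) (sigma alpha : D -> D) (angle : D -> R)
          (a b c d e : R) (p : seq R),
     List.NoDup [:: a; b; c; d; e] ->
     Permutation p [:: a; b; c; d; e] ->
     angle_congruent sigma alpha angle p ->
     (forall x, Permutation (vertex_angles sigma angle x) [:: a; b; c]
                \/ vertex_angles sigma angle x = [:: d; d; d]
                \/ vertex_angles sigma angle x = [:: e; e; e; e]) ->
     is_psubdiv_of sigma alpha angle a b c d e cube_sigma cube_alpha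
     /\ de_not_adjacent sigma alpha angle d e)
  /\
  (* vertex types  alpha beta gamma,  delta^3,  epsilon^5  :  the dodecahedron *)
  (forall (D : finType) (sigma alpha : D -> D) (angle : D -> R)
          (a b c d e : R) (p : seq R),
     List.NoDup [:: a; b; c; d; e] ->
     Permutation p [:: a; b; c; d; e] ->
     angle_congruent sigma alpha angle p ->
     (forall x, Permutation (vertex_angles sigma angle x) [:: a; b; c]
                \/ vertex_angles sigma angle x = [:: d; d; d]
                \/ vertex_angles sigma angle x = [:: e; e; e; e; e]) ->
     is_psubdiv_of sigma alpha angle a b c d e dodeca_sigma dodeca_alpha
     /\ de_not_adjacent sigma alpha angle d e).
Proof.
split.
- move=> D sigma alpha angle a b c d e p Hnd Hp Hac Hvt.
  have Hvt' : forall x, Permutation (vertex_angles sigma angle x) [:: a; b; c]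
      \/ vertex_angles sigma angle x = [:: d; d; d] \/ vertex_angles sigma angle x = nseq 4 e := Hvt.
  have Hne : 1 < 4 by [].
  have cD := card_D4 Hnd Hp Hac Hvt' Hne erefl.
  have HnK : forall k, nKc k = if k == kT then 4 else 3 by [].
  have [phi [bij Ha Hs Hk]] := DS_conclusion Hnd Hp Hac Hvt' Hne HnK cert_cubeP erefl iso_cubeP
     cert_cubeM erefl iso_cubeM cD card_cubeT.
  split; last exact: de_nadj Hnd Hp Hac Hvt' Hne.
  exists phi; split => //.
  case: Hs => Hs; [left => x | right => x]; rewrite Hs.
  + by rewrite (ps_sig_it_eq cube_finj cube_f4).
  + exact: ps_sigma_inv cube_finj cube_s3 _.
- move=> D sigma alpha angle a b c d e p Hnd Hp Hac Hvt.
  have Hvt' : forall x, Permutation (vertex_angles sigma angle x) [:: a; b; c]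
      \/ vertex_angles sigma angle x = [:: d; d; d] \/ vertex_angles sigma angle x = nseq 5 e := Hvt.
  have Hne : 1 < 5 by [].
  have cD := card_D5 Hnd Hp Hac Hvt' Hne erefl.
  have HnK : forall k, nKd k = if k == kT then 5 else 3 by [].
  have [phi [bij Ha Hs Hk]] := DS_conclusion Hnd Hp Hac Hvt' Hne HnK cert_dodP erefl iso_dodP
     cert_dodM erefl iso_dodM cD card_dodT.
  split; last exact: de_nadj Hnd Hp Hac Hvt' Hne.
  exists phi; split => //.
  case: Hs => Hs; [left => x | right => x]; rewrite Hs.
  + by rewrite (ps_sig_it_eq dod_finj dod_f5).
  + exact: ps_sigma_inv dod_finj dod_s3 _.
Qed.
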